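(* Assume $\mu\ge1/n(\boldsymbol h)$ and define $w^*,r^*:[0,1]^2\to\mathbb R$ piecewise by: if $\boldsymbol m\in R_s\cup R_t\cup(R_b\cap K)$, $r^*=F(\boldsymbol m)$ and $w^*=\max\{\bar w_s,\bar w_b,\bar w_t\}$; if $\boldsymbol m\in R_b\cap K^c\cap R_m$, $r^*=F(\boldsymbol m)+\frac{n(\boldsymbol h)(\bar w_b-\bar w_t)}{n(\boldsymbol m)n(\boldsymbol h)-1}$ and $w^*=\bar w_b-\frac{n(\boldsymbol m)n(\boldsymbol h)(\bar w_b-\bar w_t)}{n(\boldsymbol m)n(\boldsymbol h)-1}$; if $\boldsymbol m\in R_b\cap K^c\cap R_m^c$, $r^*=F(\boldsymbol m\vee\boldsymbol h)-F(\boldsymbol h)/n(\boldsymbol m)$ and $w^*=F(\boldsymbol h)$. Then: 1. $w^*$ and $r^*$ are continuous at every $\boldsymbol m\notin\partial K\cap\operatorname{int}R_b$. At every $\boldsymbol m_0\in\partial K\cap\operatorname{int}R_b$, $w^*$ drops and $r^*$ jumps up discontinuously when passing into $K^c$: $\limsup_{\boldsymbol m\to\boldsymbol m_0,\ \boldsymbol m\in K^c}w^*(\boldsymbol m)<w^*(\boldsymbol m_0)$ and $\liminf_{\boldsymbol m\to\boldsymbol m_0,\ \boldsymbol m\in K^c}r^*(\boldsymbol m)>r^*(\boldsymbol m_0)$. 2. For $i\in\{1,2\}$, $j\ne i$: if $\boldsymbol m\in\operatorname{int}R_s$ then $\partial w^*/\partial m_i=0$; if $\boldsymbol m\in\operatorname{int}R_t\cup\operatorname{int}(R_b\cap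 K)$ and $m_i<h_i$ then $\partial w^*/\partial m_i\le0$ (strictly if $m_j\ne0$); if $\boldsymbol m\in\operatorname{int}R_t\cup\operatorname{int}(R_b\cap K)$ and $m_i>h_i$ then $\partial w^*/\partial m_i>0$. Otherwise: (a) if $\boldsymbol m\in\operatorname{int}R_b\cap K^c\cap R_m^c$, then $\partial w^*/\partial m_i=0$; (b) if $\boldsymbol m\in\operatorname{int}(R_b\cap K^c\cap R_m)$ and $m_i<h_i$, then $\partial w^*/\partial m_i\le0$, with strict inequality if $m_j\ne0$; (c) if $\boldsymbol m\in\operatorname{int}(R_b\cap K^c\cap R_m)$, $m_i>h_i$ and $c\le\sqrt2/2$, then $\partial w^*/\partial m_i>0$.
   Context: Fix a cumulative distribution function $F$ on $[0,1]^2$ with a density $f$ that has full support on $[0,1]^2$, $c\in(0,1)$, $\boldsymbol h=(h_1,h_2)\in(0,1)^2$ and $\mu>0$. Write $\boldsymbol x\vee\boldsymbol y$ for the componentwise maximum and, for $F(\boldsymbol x)<1$, $n(\boldsymbol x)=\frac{1}{c(1-F(\boldsymbol x))}$. For $\boldsymbol m\in[0,1]^2$: $\bar w_s=F(\boldsymbol h)$, $\bar w_b=n(\boldsymbol m)(F(\boldsymbol m\vee\boldsymbol h)-F(\boldsymbol m))$ (with $\bar w_b:=0$ if $F(\boldsymbol m)=1$), $\bar w_t=F(\boldsymbol m\vee\boldsymbol h)-F(\boldsymbol m)/n(\boldsymbol h)$; $R_s=\{\boldsymbol m:\bar w_s\ge\max\{\bar w_b,\bar w_t\}\}$, $R_b=\{\boldsymbol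 m:\bar w_b>\max\{\bar w_s,\bar w_t\}\}$, $R_t=[0,1]^2\setminus(R_s\cup R_b)$; $K=\{\boldsymbol m\in[0,1]^2:F(\boldsymbol m)<1,\ \mu\ge n(\boldsymbol m)\}$; $R_m=\{\boldsymbol m:\bar w_b-\bar w_s\le n(\boldsymbol m)n(\boldsymbol h)(\bar w_t-\bar w_s)\}$. Complements, interiors ($\operatorname{int}$) and boundaries ($\partial$) are taken in $[0,1]^2$. In the model with a machine mass $\mu\ge1/n(\boldsymbol h)$, $w^*$ and $r^*$ as defined in the claim are the equilibrium wage and machine rental rate. *)

(* Defs.v *)
From Stdlib Require Import Reals Lra ClassicalEpsilon.
From Coquelicot Require Import Coquelicot.
Open Scope R_scope.

Definition pt := (R * R)%type.

Definition inSq (x : pt) : Prop := 0 <= fst x <= 1 /\ 0 <= snd x <= 1.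

Definition vee (x y : pt) : pt := (Rmax (fst x) (fst y), Rmax (snd x) (snd y)).

Definition cdf (f : R -> R -> R) (x : pt) : R :=
  RInt (fun t => RInt (fun s => f t s) 0 (snd x)) 0 (fst x).

Definition cont_on_sq (f : R -> R -> R) : Prop :=
  forall x, inSq x -> forall eps, 0 < eps -> exists del, 0 < del /\
    forall y, inSq y -> Rabs (fst y - fst x) < del -> Rabs (snd y - snd x) < del ->
      Rabs (f (fst y) (snd y) - f (fst x) (snd x)) < eps.

Definition nn f c (x : pt) : R := / (c * (1 - cdf f x)).

Definition ws f (h : pt) : R := cdf f h.
Definition wb f c (h m : pt) : R :=
  if Req_EM_T (cdf f m) 1 then 0
  else nn f c m * (cdf f (vee m h) - cdf f m).
Definition wt f c (h m : pt) : R := cdf f (vee m h) - cdf f m / nn f c h.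

Definition Rs f c h (m : pt) : Prop :=
  inSq m /\ ws f h >= Rmax (wb f c h m) (wt f c h m).
Definition Rb f c h (m : pt) : Prop :=
  inSq m /\ wb f c h m > Rmax (ws f h) (wt f c h m).
Definition Rt f c h (m : pt) : Prop :=
  inSq m /\ ~ Rs f c h m /\ ~ Rb f c h m.
Definition KK f c (mu : R) (m : pt) : Prop :=
  inSq m /\ cdf f m < 1 /\ mu >= nn f c m.
Definition Rm f c h (m : pt) : Prop :=
  inSq m /\ wb f c h m - ws f h <= nn f c m * nn f c h * (wt f c h m - ws f h).

Definition compl (A : pt -> Prop) (m : pt) : Prop := inSq m /\ ~ A m.
Definition inter (A B : pt -> Prop) (m : pt) : Prop := A m /\ B m.
Definition union (A B : pt -> Prop) (m : pt) : Prop := A m \/ B m.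

Definition near_pt (del : R) (x y : pt) : Prop :=
  Rabs (fst y - fst x) < del /\ Rabs (snd y - snd x) < del.

Definition sq_interior (A : pt -> Prop) (m : pt) : Prop :=
  inSq m /\ exists del, 0 < del /\ forall y, inSq y -> near_pt del m y -> A y.
Definition sq_closure (A : pt -> Prop) (m : pt) : Prop :=
  inSq m /\ forall del, 0 < del -> exists y, inSq y /\ A y /\ near_pt del m y.
Definition sq_boundary (A : pt -> Prop) (m : pt) : Prop :=
  sq_closure A m /\ sq_closure (compl A) m.

Definition cont_at (g : pt -> R) (m : pt) : Prop :=
  forall eps, 0 < eps -> exists del, 0 < del /\
    forall y, inSq y -> near_pt del m y -> Rabs (g y - g m) < eps.

(* limsup_{m -> m0, m in A} g(m) < a  (written out: some deleted
   neighbourhood on which sup g over A is <= some b < a). *)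
Definition limsup_lt (A : pt -> Prop) (g : pt -> R) (m0 : pt) (a : R) : Prop :=
  exists b, b < a /\ exists del, 0 < del /\
    forall y, inSq y -> A y -> y <> m0 -> near_pt del m0 y -> g y <= b.
Definition liminf_gt (A : pt -> Prop) (g : pt -> R) (m0 : pt) (a : R) : Prop :=
  exists b, a < b /\ exists del, 0 < del /\
    forall y, inSq y -> A y -> y <> m0 -> near_pt del m0 y -> b <= g y.

Definition wstar f c h mu (m : pt) : R :=
  match excluded_middle_informative (Rb f c h m /\ ~ KK f c mu m) with
  | left _ =>
      match excluded_middle_informative (Rm f c h m) with
      | left _ => wb f c h m - nn f c m * nn f c h * (wb f c h m - wt f c h m)
                                / (nn f c m * nn f c h - 1)
      | right _ => cdf f h
      end
  | right _ => Rmax (ws f h) (Rmax (wb f c h m) (wt f c h m))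
  end.
Definition rstar f c h mu (m : pt) : R :=
  match excluded_middle_informative (Rb f c h m /\ ~ KK f c mu m) with
  | left _ =>
      match excluded_middle_informative (Rm f c h m) with
      | left _ => cdf f m + nn f c h * (wb f c h m - wt f c h m)
                                / (nn f c m * nn f c h - 1)
      | right _ => cdf f (vee m h) - cdf f h / nn f c m
      end
  | right _ => cdf f m
  end.

Inductive idx := I1 | I2.
Definition other (i : idx) : idx := match i with I1 => I2 | I2 => I1 end.
Definition coord (i : idx) (x : pt) : R := match i with I1 => fst x | I2 => snd x end.
Definition shift (i : idx) (x : pt) (t : R) : pt :=
  match i with I1 => (fst x + t, snd x) | I2 => (fst x, snd x + t) end.

(* Partial derivative of g (defined on [0,1]^2) w.r.t. m_i at m equals d,
   the difference quotient being taken within [0,1]^2 (one-sided at edges). *)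
Definition has_pderiv (g : pt -> R) (i : idx) (m : pt) (d : R) : Prop :=
  forall eps, 0 < eps -> exists del, 0 < del /\
    forall t, t <> 0 -> Rabs t < del -> inSq (shift i m t) ->
      Rabs ((g (shift i m t) - g m) / t - d) < eps.

(* Main.v *)
Require Import Defs.
From Stdlib Require Import Reals Lra Classical ClassicalEpsilon.
From Coquelicot Require Import Coquelicot.
Open Scope R_scope.

Definition tends {T} (nr : R -> T -> Prop) (D : T -> Prop) (g : T -> R) (L : R) :=
  forall eps, 0 < eps -> exists del, 0 < del /\
    forall y, D y -> nr del y -> Rabs (g y - L) < eps.
Definition nmono {T} (nr : R -> T -> Prop) :=
  forall d1 d2 y, d1 <= d2 -> nr d1 y -> nr d2 y.

Lemma tends_const {T} nr (D : T -> Prop) k : tends nr D (fun _ => k) k.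
Proof. intros e He; exists 1; split; [lra|]; intros; rewrite Rminus_diag, Rabs_R0; lra. Qed.

Lemma tends_plus {T} nr (D : T -> Prop) g1 g2 L1 L2 : nmono nr ->
  tends nr D g1 L1 -> tends nr D g2 L2 -> tends nr D (fun y => g1 y + g2 y) (L1 + L2).
Proof.
  intros Hm H1 H2 e He.
  destruct (H1 (e/2)) as [d1 [Hd1 P1]]; [lra|].
  destruct (H2 (e/2)) as [d2 [Hd2 P2]]; [lra|].
  exists (Rmin d1 d2); split; [apply Rmin_glb_lt; lra|].
  intros y Dy Ny.
  assert (A1 := P1 y Dy (Hm _ _ _ (Rmin_l d1 d2) Ny)).
  assert (A2 := P2 y Dy (Hm _ _ _ (Rmin_r d1 d2) Ny)).
  replace (g1 y + g2 y - (L1 + L2)) with ((g1 y - L1) + (g2 y - L2)) by ring.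
  eapply Rle_lt_trans; [apply Rabs_triang|]; lra.
Qed.

Lemma tends_comp {T} nr (D : T -> Prop) g L (phi : R -> R) :
  tends nr D g L -> continuity_pt phi L -> tends nr D (fun y => phi (g y)) (phi L).
Proof.
  intros H Hc e He.
  destruct (Hc e He) as [a [Ha Pa]].
  destruct (H a Ha) as [d [Hd Pd]].
  exists d; split; auto. intros y Dy Ny.
  destruct (Req_dec (g y) L) as [E|E].
  - rewrite E, Rminus_diag, Rabs_R0; lra.
  - apply (Pa (g y)). split. { split; [exact I| intro Q; apply E; auto]. }
    simpl; unfold R_dist; apply Pd; auto.
Qed.

Lemma tends_ext {T} nr (D : T -> Prop) g g' L L' :
  (forall y, D y -> g y = g' y) -> L = L' -> tends nr D g L -> tends nr D g' L'.
Proof.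
  intros E EL H e He. subst L'. destruct (H e He) as [d [Hd P]]. exists d; split; auto.
  intros y Dy Ny. rewrite <- E; auto.
Qed.

Lemma tends_sub {T} nr (D D' : T -> Prop) g L :
  (forall y, D' y -> D y) -> tends nr D g L -> tends nr D' g L.
Proof.
  intros S H e He. destruct (H e He) as [d [Hd P]]. exists d; split; auto.
Qed.

Lemma tends_ext_near {T} nr (D : T -> Prop) g g' L : nmono nr ->
  (exists d0, 0 < d0 /\ forall y, D y -> nr d0 y -> g y = g' y) ->
  tends nr D g L -> tends nr D g' L.
Proof.
  intros Hm [d0 [Hd0 E]] H e He. destruct (H e He) as [d [Hd P]].
  exists (Rmin d d0); split; [apply Rmin_glb_lt; lra|].
  intros y Dy Ny. rewrite <- E; auto.
  - apply P; auto. eapply Hm; [apply Rmin_l|]; eauto.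
  - eapply Hm; [apply Rmin_r|]; eauto.
Qed.

Lemma tends_absent {T} nr (D : T -> Prop) g L :
  (exists d0, 0 < d0 /\ forall y, D y -> nr d0 y -> False) -> tends nr D g L.
Proof.
  intros [d0 [Hd0 E]] e He. exists d0; split; auto. intros y Dy Ny; exfalso; eauto.
Qed.

Lemma cont_id x : continuity_pt (fun z => z) x.
Proof. apply derivable_continuous_pt, derivable_pt_id. Qed.

Lemma tends_opp {T} nr (D : T -> Prop) g L :
  tends nr D g L -> tends nr D (fun y => - g y) (- L).
Proof.
  intro H. apply (tends_comp _ _ _ _ Ropp H).
  apply continuity_pt_opp, cont_id.
Qed.

Lemma tends_minus {T} nr (D : T -> Prop) g1 g2 L1 L2 : nmono nr ->
  tends nr D g1 L1 -> tends nr D g2 L2 -> tends nr D (fun y => g1 y - g2 y) (L1 - L2).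
Proof.
  intros Hm H1 H2. apply tends_plus; auto. apply tends_opp; auto.
Qed.

Lemma tends_mult {T} nr (D : T -> Prop) g1 g2 L1 L2 : nmono nr ->
  tends nr D g1 L1 -> tends nr D g2 L2 -> tends nr D (fun y => g1 y * g2 y) (L1 * L2).
Proof.
  intros Hm H1 H2.
  set (phi := fun z : R => z * z / 4).
  assert (Cphi : forall x, continuity_pt phi x).
  { intro x. unfold phi. unfold Rdiv. apply continuity_pt_mult.
    apply continuity_pt_mult; apply cont_id. apply continuity_pt_const. intros u v; auto. }
  assert (A := tends_comp _ _ _ _ phi (tends_plus _ _ _ _ _ _ Hm H1 H2) (Cphi _)).
  assert (B := tends_comp _ _ _ _ phi (tends_minus _ _ _ _ _ _ Hm H1 H2) (Cphi _)).
  assert (C := tends_minus _ _ _ _ _ _ Hm A B).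
  eapply tends_ext; [| |exact C]; intros; unfold phi; simpl; field.
Qed.

Lemma tends_inv {T} nr (D : T -> Prop) g L :
  L <> 0 -> tends nr D g L -> tends nr D (fun y => / g y) (/ L).
Proof.
  intros HL H. apply (tends_comp _ _ _ _ Rinv H).
  apply (continuity_pt_inv (fun z => z)); auto. apply cont_id.
Qed.

Lemma tends_div {T} nr (D : T -> Prop) g1 g2 L1 L2 : nmono nr -> L2 <> 0 ->
  tends nr D g1 L1 -> tends nr D g2 L2 -> tends nr D (fun y => g1 y / g2 y) (L1 / L2).
Proof.
  intros Hm HL H1 H2. apply tends_mult; auto. apply tends_inv; auto.
Qed.

Lemma Rmax_abs x y : Rmax x y = (x + y + Rabs (x - y)) / 2.
Proof. unfold Rmax; destruct (Rle_dec x y); [rewrite Rabs_left1 | rewrite Rabs_right]; lra. Qed.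

Lemma tends_max {T} nr (D : T -> Prop) g1 g2 L1 L2 : nmono nr ->
  tends nr D g1 L1 -> tends nr D g2 L2 -> tends nr D (fun y => Rmax (g1 y) (g2 y)) (Rmax L1 L2).
Proof.
  intros Hm H1 H2.
  assert (A := tends_comp _ _ _ _ Rabs (tends_minus _ _ _ _ _ _ Hm H1 H2) (Rcontinuity_abs _)).
  assert (B := tends_plus _ _ _ _ _ _ Hm (tends_plus _ _ _ _ _ _ Hm H1 H2) A).
  assert (C := tends_mult _ _ _ _ _ _ Hm B (tends_const nr D (/2))).
  eapply tends_ext; [| |exact C]; intros; simpl; rewrite Rmax_abs; field.
Qed.

Lemma tends_ge0 {T} nr (D : T -> Prop) g L :
  tends nr D g L -> (forall d, 0 < d -> exists y, D y /\ nr d y /\ 0 <= g y) -> 0 <= L.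
Proof.
  intros H C. destruct (Rle_dec 0 L) as [|N]; auto. exfalso.
  destruct (H (-L)) as [d [Hd P]]; [lra|].
  destruct (C d Hd) as [y [Dy [Ny Gy]]]. specialize (P y Dy Ny).
  apply Rabs_def2 in P. lra.
Qed.

Lemma tends_eventually_pos {T} nr (D : T -> Prop) g L : 0 < L ->
  tends nr D g L -> exists d, 0 < d /\ forall y, D y -> nr d y -> 0 < g y.
Proof.
  intros HL H. destruct (H L HL) as [d [Hd P]]. exists d; split; auto.
  intros y Dy Ny. specialize (P y Dy Ny). apply Rabs_def2 in P. lra.
Qed.

Definition nrpt (m : pt) := fun d y => near_pt d m y.
Definition nrR := fun d (t : R) => Rabs t < d.

Lemma nmono_pt m : nmono (nrpt m).
Proof. intros d1 d2 y H [A B]; split; lra. Qed.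
Lemma nmono_R : nmono nrR.
Proof. intros d1 d2 y H A; unfold nrR in *; lra. Qed.

Lemma unif1 (P : R -> R -> Prop) :
  (forall t d1 d2, 0 < d1 <= d2 -> P t d2 -> P t d1) ->
  (forall t, 0 <= t <= 1 -> exists d, 0 < d /\ forall t', 0 <= t' <= 1 -> Rabs (t' - t) < d -> P t' d) ->
  exists d, 0 < d /\ forall t, 0 <= t <= 1 -> P t d.
Proof.
  intros Mono Loc.
  set (S := fun x => 0 <= x <= 1 /\ exists d, 0 < d /\ forall t, 0 <= t <= x -> P t d).
  assert (S0 : S 0).
  { destruct (Loc 0) as [d [Hd Pd]]; [lra|]. split; [lra|]. exists d; split; auto.
    intros t Ht. apply Pd; [lra|]. replace (t - 0) with 0 by lra. rewrite Rabs_R0; lra. }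
  assert (Bd : bound S). { exists 1. intros x [Hx _]; lra. }
  destruct (completeness S Bd (ex_intro _ 0 S0)) as [s [Ub Lub]].
  assert (Hs0 : 0 <= s) by (apply Ub; auto).
  assert (Hs1 : s <= 1) by (apply Lub; intros x [Hx _]; lra).
  destruct (Loc s) as [ds [Hds Pds]]; [lra|].
  assert (Ex : exists x, S x /\ s - ds/2 < x).
  { apply NNPP; intro N. assert (s <= s - ds/2); [|lra].
    apply Lub. intros x Sx. apply Rnot_lt_le. intro L. apply N. exists x; auto. }
  destruct Ex as [x [[Hx [dx [Hdx Pdx]]] Hxs]].
  set (y := Rmin 1 (s + ds/2)).
  assert (Sy : forall t, 0 <= t <= y -> P t (Rmin dx ds)).
  { intros t Ht. destruct (Rle_dec t x).
    - apply (Mono _ _ dx). split; [apply Rmin_glb_lt; lra| apply Rmin_l]. apply Pdx; lra.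
    - apply (Mono _ _ ds). split; [apply Rmin_glb_lt; lra| apply Rmin_r].
      assert (y <= s + ds/2) by apply Rmin_r. assert (y <= 1) by apply Rmin_l.
      apply Pds; [lra|]. apply Rabs_def1; lra. }
  assert (Hy : y <= s).
  { apply Ub. split. split; [unfold y; apply Rmin_glb; lra| apply Rmin_l].
    exists (Rmin dx ds). split; [apply Rmin_glb_lt; lra| auto]. }
  assert (y = 1).
  { unfold y in *. unfold Rmin in *. destruct (Rle_dec 1 (s + ds/2)); lra. }
  exists (Rmin dx ds). split; [apply Rmin_glb_lt; lra|]. intros t Ht. apply Sy. lra.
Qed.

Lemma unif2 (P : pt -> R -> Prop) :
  (forall z d1 d2, 0 < d1 <= d2 -> P z d2 -> P z d1) ->
  (forall z, inSq z -> exists d, 0 < d /\ forall z', inSq z' -> near_pt d z z' -> P z' d) ->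
  exists d, 0 < d /\ forall z, inSq z -> P z d.
Proof.
  intros Mono Loc.
  assert (Inner : forall t, 0 <= t <= 1 -> exists d, 0 < d /\
     forall z, inSq z -> Rabs (fst z - t) < d -> P z d).
  { intros t Ht.
    destruct (unif1 (fun u d => forall z, inSq z -> Rabs (fst z - t) < d -> Rabs (snd z - u) < d -> P z d))
      as [d [Hd Pd]].
    - intros u d1 d2 Hd12 H z Hz A B. apply (Mono _ d1 d2); auto. apply H; auto; lra.
    - intros u Hu. destruct (Loc (t, u)) as [d0 [Hd0 P0]]; [split; simpl; lra|].
      exists (d0/2). split; [lra|]. intros u' Hu' Hdu z Hz A B.
      apply (Mono _ _ d0); [lra|]. apply P0; auto. split; simpl.
      + lra.
      + replace (snd z - u) with ((snd z - u') + (u' - u)) by ring.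
        eapply Rle_lt_trans; [apply Rabs_triang|]. lra.
    - exists d; split; auto. intros z Hz A. apply (Pd (snd z)); auto. destruct Hz; lra.
      rewrite Rminus_diag, Rabs_R0; lra. }
  destruct (unif1 (fun t d => forall z, inSq z -> Rabs (fst z - t) < d -> P z d)) as [d [Hd Pd]].
  - intros t d1 d2 Hd12 H z Hz A. apply (Mono _ d1 d2); auto. apply H; auto; lra.
  - intros t Ht. destruct (Inner t Ht) as [d0 [Hd0 P0]]. exists (d0/2); split; [lra|].
    intros t' Ht' Htt z Hz A. apply (Mono _ _ d0); [lra|]. apply P0; auto.
    replace (fst z - t) with ((fst z - t') + (t' - t)) by ring.
    eapply Rle_lt_trans; [apply Rabs_triang|]. lra.
  - exists d; split; auto. intros z Hz. apply (Pd (fst z)); [destruct Hz; lra|auto|].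
    rewrite Rminus_diag, Rabs_R0; lra.
Qed.

Lemma f_unif (f : R -> R -> R) : cont_on_sq f ->
  forall e, 0 < e -> exists d, 0 < d /\ forall x y, inSq x -> inSq y -> near_pt d x y ->
    Rabs (f (fst x) (snd x) - f (fst y) (snd y)) < e.
Proof.
  intros Hc e He.
  destruct (unif2 (fun z d => forall y, inSq y -> near_pt d z y ->
        Rabs (f (fst z) (snd z) - f (fst y) (snd y)) < e)) as [d [Hd Pd]].
  - intros z d1 d2 H12 H y Hy [A B]. apply H; auto. split; lra.
  - intros z0 Hz0. destruct (Hc z0 Hz0 (e/2)) as [d0 [Hd0 P0]]; [lra|].
    exists (d0/2). split; [lra|]. intros z' Hz' [A B] y Hy [C D].
    assert (E1 := P0 z' Hz' ltac:(lra) ltac:(lra)).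
    assert (E2 : Rabs (f (fst y) (snd y) - f (fst z0) (snd z0)) < e/2).
    { apply P0; auto.
      - replace (fst y - fst z0) with ((fst y - fst z') + (fst z' - fst z0)) by ring.
        eapply Rle_lt_trans; [apply Rabs_triang|]. lra.
      - replace (snd y - snd z0) with ((snd y - snd z') + (snd z' - snd z0)) by ring.
        eapply Rle_lt_trans; [apply Rabs_triang|]. lra. }
    replace (f (fst z') (snd z') - f (fst y) (snd y)) with
      ((f (fst z') (snd z') - f (fst z0) (snd z0)) - (f (fst y) (snd y) - f (fst z0) (snd z0))) by ring.
    eapply Rle_lt_trans; [apply Rabs_triang|]. rewrite Rabs_Ropp. lra.
  - exists d; split; auto.
Qed.

Lemma f_bound (f : R -> R -> R) : cont_on_sq f ->
  exists M, 0 < M /\ forall x, inSq x -> f (fst x) (snd x) <= M.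
Proof.
  intros Hc.
  destruct (unif2 (fun z d => f (fst z) (snd z) <= / d)) as [d [Hd Pd]].
  - intros z d1 d2 H12 H. eapply Rle_trans; [exact H|]. apply Rinv_le_contravar; lra.
  - intros z0 Hz0. destruct (Hc z0 Hz0 1) as [d0 [Hd0 P0]]; [lra|].
    set (A := Rabs (f (fst z0) (snd z0)) + 1).
    assert (HA : 0 < A) by (unfold A; generalize (Rabs_pos (f (fst z0) (snd z0))); lra).
    exists (Rmin d0 (/ A)). split. apply Rmin_glb_lt; auto. apply Rinv_0_lt_compat; auto.
    intros z' Hz' [B C].
    assert (E := P0 z' Hz' (Rlt_le_trans _ _ _ B (Rmin_l _ _)) (Rlt_le_trans _ _ _ C (Rmin_l _ _))).
    apply Rabs_def2 in E. generalize (Rle_abs (f (fst z0) (snd z0))); intro.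
    assert (A <= / Rmin d0 (/ A)).
    { rewrite <- (Rinv_inv A) at 1. apply Rinv_le_contravar.
      apply Rmin_glb_lt; auto. apply Rinv_0_lt_compat; auto. apply Rmin_r. }
    unfold A in *; lra.
  - exists (/ d). split. apply Rinv_0_lt_compat; auto. auto.
Qed.

Lemma RInt_minusR (g k : R -> R) a b : ex_RInt g a b -> ex_RInt k a b ->
  RInt (fun x => g x - k x) a b = RInt g a b - RInt k a b.
Proof. intros. apply (RInt_minus g k a b); auto. Qed.

Lemma ex_RInt_minusR (g k : R -> R) a b : ex_RInt g a b -> ex_RInt k a b ->
  ex_RInt (fun x => g x - k x) a b.
Proof. intros. apply (ex_RInt_minus g k a b); auto. Qed.

Lemma RInt_scalR (g : R -> R) a b k : ex_RInt g a b -> RInt (fun x => k * g x) a b = k * RInt g a b.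
Proof. intros; apply (RInt_scal g a b k); auto. Qed.

Lemma ex_RInt_scalR (g : R -> R) a b k : ex_RInt g a b -> ex_RInt (fun x => k * g x) a b.
Proof. intros. apply (ex_RInt_scal g a b k); auto. Qed.

Lemma RInt_ChaslesR (g : R -> R) a b c : ex_RInt g a b -> ex_RInt g b c ->
  RInt g a b + RInt g b c = RInt g a c.
Proof. intros. apply (RInt_Chasles g a b c); auto. Qed.

Lemma RInt_constR a b (k : R) : RInt (fun _ => k) a b = (b - a) * k.
Proof. rewrite RInt_const. reflexivity. Qed.

Lemma RInt_absle (g : R -> R) a b M : ex_RInt g a b ->
  (forall x, Rmin a b <= x <= Rmax a b -> Rabs (g x) <= M) -> Rabs (RInt g a b) <= Rabs (b - a) * M.
Proof.
  intros Hg HM. destruct (Rle_dec a b).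
  - rewrite Rmin_left, Rmax_right in HM by lra. rewrite (Rabs_right (b - a)) by lra.
    apply abs_RInt_le_const; auto.
  - rewrite Rmin_right, Rmax_left in HM by lra. rewrite (Rabs_left (b - a)) by lra.
    rewrite <- (opp_RInt_swap g b a) by (apply ex_RInt_swap; auto).
    change (Rabs (- RInt g b a) <= - (b - a) * M).
    rewrite Rabs_Ropp. replace (- (b - a)) with (a - b) by ring.
    apply abs_RInt_le_const; [lra| apply ex_RInt_swap; auto| auto].
Qed.

Lemma cont_of_eps (g : R -> R) x :
  (forall e, 0 < e -> exists d, 0 < d /\ forall y, Rabs (y - x) < d -> Rabs (g y - g x) < e) ->
  continuous g x.
Proof.
  intro H. apply continuity_pt_filterlim. intros e He. destruct (H e He) as [d [Hd P]].
  exists d; split; auto. intros y [_ Hy]. apply P. exact Hy.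
Qed.

Lemma RInt_near (g : R -> R) x t d e : ex_RInt g x (x + t) ->
  (forall y, Rabs (y - x) < d -> Rabs (g y - g x) <= e) -> Rabs t < d ->
  Rabs (RInt g x (x + t) - t * g x) <= Rabs t * e.
Proof.
  intros Hg Hc Ht.
  assert (E : RInt (fun _ => g x) x (x + t) = t * g x) by (rewrite RInt_constR; f_equal; ring).
  rewrite <- E.
  rewrite <- RInt_minusR; auto; [|apply ex_RInt_const].
  replace (Rabs t) with (Rabs (x + t - x)) by (f_equal; ring).
  apply RInt_absle. apply ex_RInt_minusR; auto; apply ex_RInt_const.
  intros y Hy. apply Hc.
  assert (Rabs (y - x) <= Rabs t).
  { unfold Rmin, Rmax in Hy; destruct (Rle_dec x (x+t));
      [rewrite Rabs_right by lra; rewrite Rabs_right by lra; lra|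
       rewrite (Rabs_left t) by lra; unfold Rabs; destruct Rcase_abs; lra]. }
  lra.
Qed.

Definition clamp (z : R) := Rmax 0 (Rmin 1 z).
Lemma clamp_in z : 0 <= clamp z <= 1.
Proof. unfold clamp, Rmax, Rmin; repeat destruct Rle_dec; lra. Qed.
Lemma clamp_id z : 0 <= z <= 1 -> clamp z = z.
Proof. intros; unfold clamp, Rmax, Rmin; repeat destruct Rle_dec; lra. Qed.
Lemma clamp_lip a b : Rabs (clamp a - clamp b) <= Rabs (a - b).
Proof. unfold clamp, Rabs, Rmax, Rmin; repeat destruct Rcase_abs; repeat destruct Rle_dec; lra. Qed.

Record fok (f : R -> R -> R) : Prop := {
  fk_cont : cont_on_sq f;
  fk_pos : forall x, inSq x -> 0 < f (fst x) (snd x) }.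

Definition fc (f : R -> R -> R) x y := f (clamp x) (clamp y).

Lemma fc_pos f : fok f -> forall x y, 0 < fc f x y.
Proof. intros Hf x y. apply (fk_pos f Hf (clamp x, clamp y)). split; apply clamp_in. Qed.

Lemma fc_bound f : fok f -> exists M, 0 < M /\ forall x y, fc f x y <= M.
Proof.
  intros Hf. destruct (f_bound f (fk_cont f Hf)) as [M [HM P]]. exists M; split; auto.
  intros x y. apply (P (clamp x, clamp y)). split; apply clamp_in.
Qed.

Lemma fc_unif f : fok f -> forall e, 0 < e -> exists d, 0 < d /\
  forall x1 x2 y1 y2, Rabs (x1 - y1) < d -> Rabs (x2 - y2) < d -> Rabs (fc f x1 x2 - fc f y1 y2) < e.
Proof.
  intros Hf e He. destruct (f_unif f (fk_cont f Hf) e He) as [d [Hd P]]. exists d; split; auto.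
  intros x1 x2 y1 y2 A B. apply (P (clamp x1, clamp x2) (clamp y1, clamp y2)).
  split; apply clamp_in. split; apply clamp_in.
  split; simpl; rewrite Rabs_minus_sym; eapply Rle_lt_trans; try apply clamp_lip; auto.
Qed.

Lemma fc_cont2 f : fok f -> forall t s, continuous (fun s => fc f t s) s.
Proof.
  intros Hf t s. apply cont_of_eps. intros e He. destruct (fc_unif f Hf e He) as [d [Hd P]].
  exists d; split; auto. intros y Hy. apply P; auto. rewrite Rminus_diag, Rabs_R0; lra.
Qed.
Lemma fc_cont1 f : fok f -> forall t s, continuous (fun t => fc f t s) t.
Proof.
  intros Hf t s. apply cont_of_eps. intros e He. destruct (fc_unif f Hf e He) as [d [Hd P]].
  exists d; split; auto. intros y Hy. apply P; auto. rewrite Rminus_diag, Rabs_R0; lra.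
Qed.

Lemma ex_fc2 f : fok f -> forall t a b, ex_RInt (fun s => fc f t s) a b.
Proof. intros. apply (ex_RInt_continuous (V:=R_CompleteNormedModule)). intros; apply fc_cont2; auto. Qed.
Lemma ex_fc1 f : fok f -> forall s a b, ex_RInt (fun t => fc f t s) a b.
Proof. intros. apply (ex_RInt_continuous (V:=R_CompleteNormedModule)). intros; apply fc_cont1; auto. Qed.

Definition HH f a b t : R := RInt (fun s => fc f t s) a b.

Lemma HH_unif f : fok f -> forall e, 0 < e -> exists d, 0 < d /\
  forall a b t t', Rabs (t' - t) < d -> Rabs (HH f a b t' - HH f a b t) <= Rabs (b - a) * e.
Proof.
  intros Hf e He. destruct (fc_unif f Hf e He) as [d [Hd P]]. exists d; split; auto.
  intros a b t t' Ht. unfold HH. rewrite <- RInt_minusR by apply ex_fc2, Hf.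
  apply RInt_absle. apply ex_RInt_minusR; apply ex_fc2, Hf.
  intros x _. left. apply P; auto. rewrite Rminus_diag, Rabs_R0; lra.
Qed.

Lemma HH_cont f : fok f -> forall a b t, continuous (HH f a b) t.
Proof.
  intros Hf a b t. apply cont_of_eps. intros e He.
  destruct (HH_unif f Hf (e / (Rabs (b - a) + 1))) as [d [Hd P]].
  { apply Rdiv_lt_0_compat; auto. generalize (Rabs_pos (b-a)); lra. }
  exists d; split; auto. intros y Hy. eapply Rle_lt_trans; [apply P; auto|].
  assert (0 <= Rabs (b - a)) by apply Rabs_pos.
  apply (Rmult_lt_reg_r (Rabs (b - a) + 1)); [lra|]. field_simplify; [|lra]. nra.
Qed.

Lemma ex_HH f : fok f -> forall a b u v, ex_RInt (HH f a b) u v.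
Proof. intros. apply (ex_RInt_continuous (V:=R_CompleteNormedModule)). intros; apply HH_cont; auto. Qed.

Definition Fx f (x : pt) : R := RInt (HH f 0 (snd x)) 0 (fst x).

Lemma cdf_Fx f x : inSq x -> cdf f x = Fx f x.
Proof.
  intros [[A B] [C D]]. unfold cdf, Fx. apply RInt_ext. intros t Ht.
  rewrite Rmin_left in Ht by lra. rewrite Rmax_right in Ht by lra.
  unfold HH, fc. apply RInt_ext. intros s Hs.
  rewrite Rmin_left in Hs by lra. rewrite Rmax_right in Hs by lra.
  rewrite !clamp_id by lra. auto.
Qed.

Lemma RInt_extR (g k : R -> R) a b : (forall x, Rmin a b < x < Rmax a b -> g x = k x) ->
  RInt g a b = RInt k a b.
Proof. intros. apply RInt_ext; auto. Qed.

Record Fok (F : pt -> R) (D : idx -> pt -> R) : Prop := {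
  Fk_cont : forall m, inSq m -> tends (nrpt m) inSq F (F m);
  Fk_mono : forall x y, inSq x -> inSq y -> fst x <= fst y -> snd x <= snd y -> F x <= F y;
  Fk_nonneg : forall x, inSq x -> 0 <= F x;
  Fk_le1 : forall x, inSq x -> F x <= 1;
  Fk_lt1 : forall x, inSq x -> (fst x < 1 \/ snd x < 1) -> F x < 1;
  Fk_pos : forall x, inSq x -> 0 < fst x -> 0 < snd x -> 0 < F x;
  Fk_der : forall i p, inSq p -> tends nrR (fun t => t <> 0 /\ inSq (shift i p t))
              (fun t => (F (shift i p t) - F p) / t) (D i p);
  Dk_nonneg : forall i p, inSq p -> 0 <= D i p;
  Dk_pos : forall i p, inSq p -> coord (other i) p <> 0 -> 0 < D i p;
  Dk_mono : forall i p q, inSq p -> inSq q -> coord i p = coord i q ->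
              coord (other i) p < coord (other i) q -> D i p < D i q }.

Definition Dk f (i : idx) (p : pt) : R :=
  match i with
  | I1 => HH f 0 (snd p) (fst p)
  | I2 => RInt (fun t => fc f t (snd p)) 0 (fst p)
  end.

Lemma HH_chasles f : fok f -> forall a b c t, HH f a b t + HH f b c t = HH f a c t.
Proof. intros Hf a b c t. unfold HH. apply RInt_ChaslesR; apply ex_fc2; auto. Qed.

Lemma Fx_diff1 f : fok f -> forall a b c, Fx f (b, c) - Fx f (a, c) = RInt (HH f 0 c) a b.
Proof.
  intros Hf a b c. unfold Fx; simpl. rewrite <- (RInt_ChaslesR _ 0 a b) by apply ex_HH, Hf. ring.
Qed.

Lemma Fx_diff2 f : fok f -> forall a b c, Fx f (a, c) - Fx f (a, b) = RInt (HH f b c) 0 a.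
Proof.
  intros Hf a b c. unfold Fx; simpl. rewrite <- RInt_minusR by apply ex_HH, Hf.
  apply RInt_extR. intros t _. rewrite <- (HH_chasles f Hf 0 b c). ring.
Qed.

Lemma HH_nonneg f : fok f -> forall a b t, a <= b -> 0 <= HH f a b t.
Proof.
  intros Hf a b t Hab. unfold HH. apply RInt_ge_0; auto. apply ex_fc2; auto.
  intros; left; apply fc_pos; auto.
Qed.

Lemma HH_pos f : fok f -> forall a b t, a < b -> 0 < HH f a b t.
Proof.
  intros Hf a b t Hab. unfold HH. apply RInt_gt_0; auto.
  intros; apply fc_pos; auto. intros; apply fc_cont2; auto.
Qed.

Lemma Fx_lt1 f : fok f -> forall a b c, a < b -> 0 < c -> Fx f (a, c) < Fx f (b, c).
Proof.
  intros Hf a b c Hab Hc. assert (E := Fx_diff1 f Hf a b c).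
  assert (0 < RInt (HH f 0 c) a b); [|lra].
  apply RInt_gt_0; auto. intros; apply HH_pos; auto. intros; apply HH_cont; auto.
Qed.

Lemma Fx_lt2 f : fok f -> forall a b c, 0 < a -> b < c -> Fx f (a, b) < Fx f (a, c).
Proof.
  intros Hf a b c Ha Hbc. assert (E := Fx_diff2 f Hf a b c).
  assert (0 < RInt (HH f b c) 0 a); [|lra].
  apply RInt_gt_0; auto. intros; apply HH_pos; auto. intros; apply HH_cont; auto.
Qed.

Lemma Fx_mono f : fok f -> forall x y, 0 <= fst x -> 0 <= snd x -> fst x <= fst y -> snd x <= snd y ->
  Fx f x <= Fx f y.
Proof.
  intros Hf [x1 x2] [y1 y2]; simpl; intros A B C D.
  assert (E1 := Fx_diff1 f Hf x1 y1 y2). assert (E2 := Fx_diff2 f Hf x1 x2 y2).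
  assert (0 <= RInt (HH f 0 y2) x1 y1).
  { apply RInt_ge_0; auto. apply ex_HH; auto. intros; apply HH_nonneg; auto; lra. }
  assert (0 <= RInt (HH f x2 y2) 0 x1).
  { apply RInt_ge_0; auto. apply ex_HH; auto. intros; apply HH_nonneg; auto; lra. }
  lra.
Qed.

Lemma Fx_zero f : forall c, Fx f (0, c) = 0.
Proof. intros. unfold Fx; simpl. rewrite RInt_point. reflexivity. Qed.

Lemma quot_bound N t L k e : t <> 0 -> Rabs (N - t * L) <= Rabs t * k -> k < e ->
  Rabs (N / t - L) < e.
Proof.
  intros Ht H Hk. replace (N / t - L) with ((N - t * L) / t) by (field; auto).
  unfold Rdiv. rewrite Rabs_mult, Rabs_inv.
  assert (0 < Rabs t) by (apply Rabs_pos_lt; auto).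
  apply (Rmult_le_compat_r (/ Rabs t)) in H; [|left; apply Rinv_0_lt_compat; auto].
  replace (Rabs t * k * / Rabs t) with k in H by (field; lra). lra.
Qed.

Lemma Fx_der1 f : fok f -> forall p, 0 <= snd p <= 1 -> forall e, 0 < e -> exists d, 0 < d /\
  forall t, t <> 0 -> Rabs t < d -> Rabs ((Fx f (fst p + t, snd p) - Fx f p) / t - Dk f I1 p) < e.
Proof.
  intros Hf [p1 p2] Hp e He; simpl in *.
  destruct (HH_unif f Hf (e/2)) as [d [Hd P]]; [lra|].
  exists d; split; auto. intros t Ht Htd.
  apply (quot_bound _ _ _ (e/2)); auto; [|lra].
  rewrite Fx_diff1 by auto.
  apply (RInt_near _ _ _ d); auto. apply ex_HH; auto.
  intros y Hy. eapply Rle_trans; [apply P; auto|].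
  replace (p2 - 0) with p2 by ring. rewrite Rabs_right by lra. nra.
Qed.

Lemma Fx_der2 f : fok f -> forall p, 0 <= fst p <= 1 -> forall e, 0 < e -> exists d, 0 < d /\
  forall t, t <> 0 -> Rabs t < d -> Rabs ((Fx f (fst p, snd p + t) - Fx f p) / t - Dk f I2 p) < e.
Proof.
  intros Hf [p1 p2] Hp e He; simpl in *.
  destruct (fc_unif f Hf (e/2)) as [d [Hd P]]; [lra|].
  exists d; split; auto. intros t Ht Htd.
  apply (quot_bound _ _ _ (e/2)); auto; [|lra].
  rewrite Fx_diff2 by auto.
  rewrite <- RInt_scalR by apply ex_fc1, Hf.
  rewrite <- RInt_minusR; [| apply ex_HH, Hf| apply ex_RInt_scalR, ex_fc1, Hf].
  eapply Rle_trans. apply (RInt_absle _ _ _ (Rabs t * (e/2))).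
  { apply ex_RInt_minusR; [apply ex_HH, Hf| apply ex_RInt_scalR, ex_fc1, Hf]. }
  { intros x _. unfold HH. apply (RInt_near (fun s => fc f x s) p2 t d (e/2)); auto.
    apply ex_fc2; auto. intros y Hy. left. apply P; auto. rewrite Rminus_diag, Rabs_R0; lra. }
  replace (p1 - 0) with p1 by ring. rewrite (Rabs_right p1) by lra.
  assert (0 <= Rabs t * (e/2)) by (apply Rmult_le_pos; [apply Rabs_pos|lra]). nra.
Qed.

Lemma HH_bound f M : fok f -> (forall x y, fc f x y <= M) -> forall a b t,
  Rabs (HH f a b t) <= Rabs (b - a) * M.
Proof.
  intros Hf HM a b t. unfold HH. apply RInt_absle. apply ex_fc2; auto.
  intros x _. rewrite Rabs_right. apply HM. left; apply fc_pos; auto.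
Qed.

Lemma Fx_lip f : fok f -> exists M, 0 < M /\ forall x y, inSq x -> inSq y ->
  Rabs (Fx f x - Fx f y) <= M * (Rabs (fst x - fst y) + Rabs (snd x - snd y)).
Proof.
  intros Hf. destruct (fc_bound f Hf) as [M [HM PM]]. exists M; split; auto.
  intros [x1 x2] [y1 y2] [[A1 A2] [A3 A4]] [[B1 B2] [B3 B4]]; simpl in *.
  assert (E1 := Fx_diff1 f Hf y1 x1 x2). assert (E2 := Fx_diff2 f Hf y1 y2 x2).
  replace (Fx f (x1, x2) - Fx f (y1, y2)) with
    (RInt (HH f 0 x2) y1 x1 + RInt (HH f y2 x2) 0 y1) by lra.
  eapply Rle_trans; [apply Rabs_triang|].
  assert (X1 : Rabs (RInt (HH f 0 x2) y1 x1) <= Rabs (x1 - y1) * M).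
  { apply RInt_absle. apply ex_HH; auto. intros t _. eapply Rle_trans; [apply HH_bound; eauto|].
    replace (x2 - 0) with x2 by ring. rewrite Rabs_right by lra. nra. }
  assert (X2 : Rabs (RInt (HH f y2 x2) 0 y1) <= Rabs (y1 - 0) * (Rabs (x2 - y2) * M)).
  { apply RInt_absle. apply ex_HH; auto. intros t _. apply HH_bound; auto. }
  replace (y1 - 0) with y1 in X2 by ring. rewrite (Rabs_right y1) in X2 by lra.
  assert (0 <= Rabs (x2 - y2) * M) by (apply Rmult_le_pos; [apply Rabs_pos|lra]).
  assert (y1 * (Rabs (x2 - y2) * M) <= Rabs (x2 - y2) * M) by nra.
  nra.
Qed.

Lemma cdf_Fok f : fok f -> cdf f (1, 1) = 1 -> Fok (cdf f) (Dk f).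
Proof.
  intros Hf Hm.
  assert (Sq11 : inSq (1, 1)) by (split; simpl; lra).
  assert (Hm' : Fx f (1, 1) = 1) by (rewrite <- cdf_Fx; auto).
  split.
  - intros m Hmq. destruct (Fx_lip f Hf) as [M [HM P]].
    intros e He. exists (e / (2 * M)). split. apply Rdiv_lt_0_compat; lra.
    intros y Hy [N1 N2]. rewrite !cdf_Fx by auto.
    eapply Rle_lt_trans; [apply P; auto|].
    rewrite (Rabs_minus_sym (fst y)), (Rabs_minus_sym (snd y)).
    apply (Rmult_lt_reg_r (/ M)). apply Rinv_0_lt_compat; lra.
    replace (M * (Rabs (fst m - fst y) + Rabs (snd m - snd y)) * / M)
      with (Rabs (fst m - fst y) + Rabs (snd m - snd y)) by (field; lra).
    replace (e * / M) with (2 * (e / (2 * M))) by (field; lra).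
    rewrite (Rabs_minus_sym (fst m)), (Rabs_minus_sym (snd m)). lra.
  - intros x y Hx Hy A B. rewrite !cdf_Fx by auto. apply Fx_mono; auto; destruct Hx as [[? ?] [? ?]]; lra.
  - intros x Hx. rewrite cdf_Fx by auto. rewrite <- (Fx_zero f 0).
    apply Fx_mono; auto; simpl; destruct Hx as [[? ?] [? ?]]; lra.
  - intros x Hx. rewrite cdf_Fx by auto. rewrite <- Hm'.
    apply Fx_mono; auto; simpl; destruct Hx as [[? ?] [? ?]]; lra.
  - intros [x1 x2] Hx HH1. rewrite cdf_Fx by auto. rewrite <- Hm'. destruct Hx as [[A B] [C D]]; simpl in *.
    destruct HH1 as [E|E].
    + apply Rle_lt_trans with (Fx f (x1, 1)). apply Fx_mono; auto; simpl; lra.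
      apply Fx_lt1; auto; lra.
    + apply Rle_lt_trans with (Fx f (1, x2)). apply Fx_mono; auto; simpl; lra.
      apply Fx_lt2; auto; lra.
  - intros [x1 x2] Hx A B. rewrite cdf_Fx by auto. simpl in *. rewrite <- (Fx_zero f x2).
    apply Fx_lt1; auto.
  - intros i p Hp. destruct i; intros e He.
    + destruct (Fx_der1 f Hf p ltac:(destruct Hp; lra) e He) as [d [Hd P]].
      exists d; split; auto. intros t [Ht Hs] Htd. simpl in Hs |- *.
      rewrite !cdf_Fx by auto. apply P; auto.
    + destruct (Fx_der2 f Hf p ltac:(destruct Hp; lra) e He) as [d [Hd P]].
      exists d; split; auto. intros t [Ht Hs] Htd. simpl in Hs |- *.
      rewrite !cdf_Fx by auto. apply P; auto.
  - intros i p Hp. destruct Hp as [[A B] [C D]]. destruct i; simpl.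
    + apply HH_nonneg; auto.
    + apply RInt_ge_0; auto. apply ex_fc1; auto. intros; left; apply fc_pos; auto.
  - intros i p Hp Hne. destruct Hp as [[A B] [C D]]. destruct i; simpl in *.
    + apply HH_pos; auto. lra.
    + apply RInt_gt_0. lra. intros; apply fc_pos; auto. intros; apply fc_cont1; auto.
  - intros i [p1 p2] [q1 q2] Hp Hq E L. destruct Hp as [[A B] [C D]]. destruct Hq as [[A' B'] [C' D']].
    destruct i; simpl in *; subst.
    + rewrite <- (HH_chasles f Hf 0 p2 q2). assert (0 < HH f p2 q2 q1) by (apply HH_pos; auto). lra.
    + rewrite <- (RInt_ChaslesR _ 0 p1 q1) by apply ex_fc1, Hf.
      assert (0 < RInt (fun t => fc f t q2) p1 q1); [|lra].
      apply RInt_gt_0; auto. intros; apply fc_pos; auto. intros; apply fc_cont1; auto.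
Qed.

Lemma cpa_lt1 c s0 u : 0 < c < 1 -> 0 < s0 < 1 -> 0 <= u < 1 -> c * (1 - u) * (c * (1 - s0)) < 1.
Proof.
  intros. assert (0 < c * (1 - u) <= 1) by (split; nra).
  assert (0 < c * (1 - s0) < 1) by (split; nra). nra.
Qed.

Lemma alg_Q2 c s0 u v : 0 < c < 1 -> 0 < s0 < 1 -> 0 <= u < 1 ->
  (v - u) / (c * (1 - u)) - / (c * (1 - u)) * / (c * (1 - s0)) *
    ((v - u) / (c * (1 - u)) - (v - u * (c * (1 - s0)))) / (/ (c * (1 - u)) * / (c * (1 - s0)) - 1)
  = v * (1 - c * (1 - s0)) / (1 - c * (c * (1 - s0)) * (1 - u)).
Proof.
  intros Hc Hs Hu. assert (L := cpa_lt1 c s0 u Hc Hs Hu).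
  assert (c * (1 - u) <> 0) by nra. assert (c * (1 - s0) <> 0) by nra.
  assert (/ (c * (1 - u)) * / (c * (1 - s0)) - 1 <> 0).
  { rewrite <- Rinv_mult. intro E.
    assert (/ (c * (1 - u) * (c * (1 - s0))) > 1).
    { rewrite <- Rinv_1. apply Rinv_lt_contravar; nra. } lra. }
  field. repeat split; auto; nra.
Qed.

Lemma alg_R2 c s0 u v : 0 < c < 1 -> 0 < s0 < 1 -> 0 <= u < 1 ->
  u + / (c * (1 - s0)) *
    ((v - u) / (c * (1 - u)) - (v - u * (c * (1 - s0)))) / (/ (c * (1 - u)) * / (c * (1 - s0)) - 1)
  = v * (1 - c * (1 - u)) / (1 - c * (c * (1 - s0)) * (1 - u)).
Proof.
  intros Hc Hs Hu. assert (L := cpa_lt1 c s0 u Hc Hs Hu).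
  assert (c * (1 - u) <> 0) by nra. assert (c * (1 - s0) <> 0) by nra.
  assert (/ (c * (1 - u)) * / (c * (1 - s0)) - 1 <> 0).
  { rewrite <- Rinv_mult. intro E.
    assert (/ (c * (1 - u) * (c * (1 - s0))) > 1).
    { rewrite <- Rinv_1. apply Rinv_lt_contravar; nra. } lra. }
  field. repeat split; auto; nra.
Qed.

Record ctx f c h D : Prop := {
  cx_F : Fok (cdf f) D;
  cx_c : 0 < c < 1;
  cx_h : 0 < fst h < 1 /\ 0 < snd h < 1 }.

Lemma sq_h f c h D : ctx f c h D -> inSq h.
Proof. intros X. destruct (cx_h _ _ _ _ X). split; lra. Qed.

Lemma s0_bounds f c h D : ctx f c h D -> 0 < cdf f h < 1.
Proof.
  intros X. assert (H := cx_h _ _ _ _ X). assert (S := sq_h _ _ _ _ X). split.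
  apply (Fk_pos _ _ (cx_F _ _ _ _ X)); auto; lra.
  apply (Fk_lt1 _ _ (cx_F _ _ _ _ X)); auto; lra.
Qed.

Lemma vee_sq f c h D m : ctx f c h D -> inSq m -> inSq (vee m h).
Proof.
  intros X [[A B] [C E]]. assert (H := cx_h _ _ _ _ X). unfold vee; split; simpl;
  unfold Rmax; repeat destruct Rle_dec; lra.
Qed.

Lemma vee_ge m h : fst h <= fst m -> snd h <= snd m -> vee m h = m.
Proof. intros A B. unfold vee. rewrite !Rmax_left by lra. destruct m; auto. Qed.

Lemma U_le_V f c h D m : ctx f c h D -> inSq m -> cdf f m <= cdf f (vee m h).
Proof.
  intros X Hm. apply (Fk_mono _ _ (cx_F _ _ _ _ X)); auto. apply (vee_sq f c h D); auto.
  apply Rmax_l. apply Rmax_l.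
Qed.

Lemma U_bounds f c h D m : ctx f c h D -> inSq m -> 0 <= cdf f m <= 1.
Proof. intros X Hm. split; [apply (Fk_nonneg _ _ (cx_F _ _ _ _ X))| apply (Fk_le1 _ _ (cx_F _ _ _ _ X))]; auto. Qed.

Lemma V_bounds f c h D m : ctx f c h D -> inSq m -> 0 <= cdf f (vee m h) <= 1.
Proof. intros X Hm. apply (U_bounds f c h D); auto. apply (vee_sq f c h D); auto. Qed.

Lemma wt_eq f c h m : wt f c h m = cdf f (vee m h) - cdf f m * (c * (1 - cdf f h)).
Proof. unfold wt, nn, Rdiv. rewrite Rinv_inv. ring. Qed.

Lemma wb_eq f c h m : 0 < c -> cdf f m <> 1 ->
  wb f c h m = (cdf f (vee m h) - cdf f m) / (c * (1 - cdf f m)).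
Proof.
  intros Hc Hu. unfold wb. destruct (Req_EM_T (cdf f m) 1); [contradiction|].
  unfold nn. field. split; [|lra]. intro; apply Hu; lra.
Qed.

Lemma wb_1 f c h m : cdf f m = 1 -> wb f c h m = 0.
Proof. intros E. unfold wb. destruct (Req_EM_T (cdf f m) 1); [auto|contradiction]. Qed.

Lemma wb_zero_ge f c h m : 0 < c -> fst h <= fst m -> snd h <= snd m -> wb f c h m = 0.
Proof.
  intros Hc A B. destruct (Req_dec (cdf f m) 1). apply wb_1; auto.
  rewrite wb_eq; auto. rewrite vee_ge; auto. unfold Rdiv; ring.
Qed.

Lemma Rb_lt1 f c h D m : ctx f c h D -> Rb f c h m -> cdf f m < 1.
Proof.
  intros X [Hm Hb]. assert (S := s0_bounds f c h D X).
  destruct (Req_dec (cdf f m) 1) as [E|E].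
  - rewrite wb_1 in Hb; auto. unfold ws in Hb. generalize (Rmax_l (cdf f h) (wt f c h m)); lra.
  - generalize (U_bounds f c h D m X Hm); lra.
Qed.

Lemma Rb_wb f c h m : Rb f c h m -> wb f c h m > cdf f h /\ wb f c h m > wt f c h m.
Proof.
  intros [_ Hb]. unfold ws in Hb. generalize (Rmax_l (cdf f h) (wt f c h m)) (Rmax_r (cdf f h) (wt f c h m)); lra.
Qed.

Definition aa f c h := c * (1 - cdf f h).
Definition Q2 f c h m := cdf f (vee m h) * (1 - aa f c h) / (1 - c * aa f c h * (1 - cdf f m)).
Definition R2 f c h m := cdf f (vee m h) * (1 - c * (1 - cdf f m)) / (1 - c * aa f c h * (1 - cdf f m)).
Definition r3 f c h m := cdf f (vee m h) - cdf f h * (c * (1 - cdf f m)).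
Definition Dfun f c h m := nn f c m * nn f c h * (wt f c h m - ws f h) - (wb f c h m - ws f h).
Definition BB f c h mu m := Rb f c h m /\ ~ KK f c mu m.

Lemma w_P1 f c h mu m : ~ BB f c h mu m ->
  wstar f c h mu m = Rmax (cdf f h) (Rmax (wb f c h m) (wt f c h m)).
Proof. intros N. unfold wstar. destruct (excluded_middle_informative _); [contradiction|auto]. Qed.
Lemma r_U f c h mu m : ~ BB f c h mu m -> rstar f c h mu m = cdf f m.
Proof. intros N. unfold rstar. destruct (excluded_middle_informative _); [contradiction|auto]. Qed.

Lemma w_Q2 f c h D mu m : ctx f c h D -> BB f c h mu m -> Rm f c h m -> wstar f c h mu m = Q2 f c h m.
Proof.
  intros X B Hm. assert (U := Rb_lt1 f c h D m X (proj1 B)).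
  assert (UB := U_bounds f c h D m X (proj1 (proj1 B))). assert (S := s0_bounds f c h D X).
  assert (Hc := cx_c _ _ _ _ X).
  unfold wstar. destruct (excluded_middle_informative _); [|contradiction].
  destruct (excluded_middle_informative _); [|contradiction].
  rewrite (wb_eq f c h m) by lra. rewrite wt_eq. unfold nn, Q2, aa.
  apply alg_Q2; lra.
Qed.

Lemma r_R2 f c h D mu m : ctx f c h D -> BB f c h mu m -> Rm f c h m -> rstar f c h mu m = R2 f c h m.
Proof.
  intros X B Hm. assert (U := Rb_lt1 f c h D m X (proj1 B)).
  assert (UB := U_bounds f c h D m X (proj1 (proj1 B))). assert (S := s0_bounds f c h D X).
  assert (Hc := cx_c _ _ _ _ X).
  unfold rstar. destruct (excluded_middle_informative _); [|contradiction].
  destruct (excluded_middle_informative _); [|contradiction].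
  rewrite (wb_eq f c h m) by lra. rewrite wt_eq. unfold nn, R2, aa.
  apply alg_R2; lra.
Qed.

Lemma w_s0 f c h mu m : BB f c h mu m -> ~ Rm f c h m -> wstar f c h mu m = cdf f h.
Proof.
  intros B Hm. unfold wstar. destruct (excluded_middle_informative _); [|contradiction].
  destruct (excluded_middle_informative _); [contradiction|auto].
Qed.

Lemma r_r3 f c h mu m : BB f c h mu m -> ~ Rm f c h m -> rstar f c h mu m = r3 f c h m.
Proof.
  intros B Hm. unfold rstar. destruct (excluded_middle_informative _); [|contradiction].
  destruct (excluded_middle_informative _); [contradiction|].
  unfold r3, nn, Rdiv. rewrite Rinv_inv. auto.
Qed.

Lemma Rm_iff f c h m : Rm f c h m <-> inSq m /\ 0 <= Dfun f c h m.
Proof. unfold Rm, Dfun. split; intros [A B]; split; auto; lra. Qed.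

Lemma inv_gt1 x : 0 < x < 1 -> / x > 1.
Proof. intros. assert (x * / x = 1) by (field; lra). assert (0 < / x) by (apply Rinv_0_lt_compat; lra). nra. Qed.

Lemma N_gt1 f c h D m : ctx f c h D -> inSq m -> cdf f m < 1 -> nn f c m * nn f c h > 1.
Proof.
  intros X Hm U. assert (UB := U_bounds f c h D m X Hm). assert (S := s0_bounds f c h D X).
  assert (Hc := cx_c _ _ _ _ X). unfold nn. rewrite <- Rinv_mult.
  apply inv_gt1. split. apply Rmult_lt_0_compat; apply Rmult_lt_0_compat; lra. apply cpa_lt1; lra.
Qed.

Lemma ident_w f c h D m : ctx f c h D -> inSq m -> cdf f m < 1 ->
  let N := nn f c m * nn f c h in
  Q2 f c h m - cdf f h = Dfun f c h m / (N - 1) /\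
  wb f c h m - Q2 f c h m = N * (wb f c h m - wt f c h m) / (N - 1).
Proof.
  intros X Hm U N. assert (UB := U_bounds f c h D m X Hm). assert (S := s0_bounds f c h D X).
  assert (Hc := cx_c _ _ _ _ X). assert (NG := N_gt1 f c h D m X Hm U).
  assert (E : Q2 f c h m = wb f c h m - N * (wb f c h m - wt f c h m) / (N - 1)).
  { unfold N. rewrite (wb_eq f c h m) by lra. rewrite wt_eq. unfold nn, Q2, aa.
    symmetry; apply alg_Q2; lra. }
  rewrite E. unfold Dfun, ws. fold N. fold N in NG. split; field; lra.
Qed.

Lemma ident_r f c h D m : ctx f c h D -> inSq m -> cdf f m < 1 ->
  let N := nn f c m * nn f c h in
  R2 f c h m - r3 f c h m = - Dfun f c h m / (nn f c m * (N - 1)) /\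
  R2 f c h m - cdf f m = nn f c h * (wb f c h m - wt f c h m) / (N - 1) /\
  r3 f c h m - cdf f m = (wb f c h m - cdf f h) / nn f c m.
Proof.
  intros X Hm U N. assert (UB := U_bounds f c h D m X Hm). assert (S := s0_bounds f c h D X).
  assert (Hc := cx_c _ _ _ _ X). assert (NG := N_gt1 f c h D m X Hm U).
  assert (E : R2 f c h m = cdf f m + nn f c h * (wb f c h m - wt f c h m) / (N - 1)).
  { unfold N. rewrite (wb_eq f c h m) by lra. rewrite wt_eq. unfold nn, R2, aa.
    symmetry; apply alg_R2; lra. }
  assert (En : nn f c m * (c * (1 - cdf f m)) = 1) by (unfold nn; field; nra).
  assert (Enz : nn f c m <> 0) by (intro Z; rewrite Z in En; lra).
  assert (Ewb : wb f c h m = nn f c m * (cdf f (vee m h) - cdf f m)).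
  { rewrite (wb_eq f c h m) by lra. unfold nn. field. nra. }
  assert (Er3 : r3 f c h m = cdf f (vee m h) - cdf f h / nn f c m).
  { unfold r3, nn, Rdiv. rewrite Rinv_inv. ring. }
  rewrite E, Er3. unfold Dfun, ws. fold N. rewrite Ewb.
  rewrite wt_eq. replace (c * (1 - cdf f h)) with (/ nn f c h) by (unfold nn; rewrite Rinv_inv; auto).
  assert (nn f c h <> 0) by (unfold nn; apply Rinv_neq_0_compat; nra).
  unfold N. repeat split; field; repeat split; auto; unfold N in NG; lra.
Qed.

Lemma Rmax_lip a b c : Rabs (Rmax a c - Rmax b c) <= Rabs (a - b).
Proof. unfold Rmax, Rabs; repeat destruct Rle_dec; repeat destruct Rcase_abs; lra. Qed.


Lemma T_U f c h D m0 : ctx f c h D -> inSq m0 -> tends (nrpt m0) inSq (cdf f) (cdf f m0).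
Proof. intros X H. apply (Fk_cont _ _ (cx_F _ _ _ _ X)); auto. Qed.

Lemma T_V f c h D m0 : ctx f c h D -> inSq m0 ->
  tends (nrpt m0) inSq (fun y => cdf f (vee y h)) (cdf f (vee m0 h)).
Proof.
  intros X H e He. destruct (Fk_cont _ _ (cx_F _ _ _ _ X) (vee m0 h) (vee_sq f c h D m0 X H) e He)
    as [d [Hd P]].
  exists d; split; auto. intros y Hy [N1 N2]. apply P. apply (vee_sq f c h D); auto.
  split; unfold vee; simpl; eapply Rle_lt_trans; try apply Rmax_lip; auto.
Qed.

Lemma T_wt f c h D m0 : ctx f c h D -> inSq m0 -> tends (nrpt m0) inSq (wt f c h) (wt f c h m0).
Proof.
  intros X H. assert (M := nmono_pt m0).
  eapply tends_ext; [intros y _; symmetry; apply wt_eq| symmetry; apply wt_eq|].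
  apply tends_minus; auto. apply (T_V f c h D); auto.
  apply tends_mult; auto. apply (T_U f c h D); auto. apply tends_const.
Qed.

Lemma T_lt1 f c h D m0 : ctx f c h D -> inSq m0 -> cdf f m0 < 1 ->
  exists d, 0 < d /\ forall y, inSq y -> nrpt m0 d y -> cdf f y < 1.
Proof.
  intros X H U. assert (M := nmono_pt m0).
  destruct (tends_eventually_pos (nrpt m0) inSq (fun y => 1 - cdf f y) (1 - cdf f m0)) as [d [Hd P]].
  lra. apply tends_minus; auto. apply tends_const. apply (T_U f c h D); auto.
  exists d; split; auto. intros y Hy N. specialize (P y Hy N). lra.
Qed.

Lemma T_wb f c h D m0 : ctx f c h D -> inSq m0 -> tends (nrpt m0) inSq (wb f c h) (wb f c h m0).
Proof.
  intros X H. assert (M := nmono_pt m0). assert (Hc := cx_c _ _ _ _ X).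
  assert (UB := U_bounds f c h D m0 X H).
  destruct (Req_dec (cdf f m0) 1) as [E|E].
  - assert (Hm0 : fst m0 = 1 /\ snd m0 = 1).
    { destruct H as [[A B] [C C']]. destruct (Rlt_dec (fst m0) 1) as [L|L].
      exfalso. assert (cdf f m0 < 1) by (apply (Fk_lt1 _ _ (cx_F _ _ _ _ X)); [split; split; lra| auto]). lra.
      destruct (Rlt_dec (snd m0) 1) as [L'|L'].
      exfalso. assert (cdf f m0 < 1) by (apply (Fk_lt1 _ _ (cx_F _ _ _ _ X)); [split; split; lra| auto]). lra.
      lra. }
    assert (Hh := cx_h _ _ _ _ X).
    rewrite (wb_1 f c h m0 E). apply (tends_ext_near _ _ (fun _ => 0)); auto; [|apply tends_const].
    exists (Rmin (1 - fst h) (1 - snd h)). split. apply Rmin_glb_lt; lra.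
    intros y Hy [N1 N2]. symmetry. apply wb_zero_ge; [lra| |].
    + assert (Rmin (1 - fst h) (1 - snd h) <= 1 - fst h) by apply Rmin_l.
      apply Rabs_def2 in N1. lra.
    + assert (Rmin (1 - fst h) (1 - snd h) <= 1 - snd h) by apply Rmin_r.
      apply Rabs_def2 in N2. lra.
  - assert (U : cdf f m0 < 1) by lra.
    rewrite (wb_eq f c h m0) by lra.
    apply (tends_ext_near _ _ (fun y => (cdf f (vee y h) - cdf f y) / (c * (1 - cdf f y)))); auto.
    + destruct (T_lt1 f c h D m0 X H U) as [d [Hd P]]. exists d; split; auto.
      intros y Hy N. symmetry. apply wb_eq. lra. specialize (P y Hy N). lra.
    + apply tends_div; auto. apply Rgt_not_eq; nra. apply tends_minus; auto. apply (T_V f c h D); auto.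
      apply (T_U f c h D); auto. apply tends_mult; auto. apply tends_const.
      apply tends_minus; auto. apply tends_const. apply (T_U f c h D); auto.
Qed.

Lemma T_nn f c h D m0 : ctx f c h D -> inSq m0 -> cdf f m0 < 1 ->
  tends (nrpt m0) inSq (nn f c) (nn f c m0).
Proof.
  intros X H U. assert (M := nmono_pt m0). assert (Hc := cx_c _ _ _ _ X).
  unfold nn. apply tends_inv. apply Rgt_not_eq; nra. apply tends_mult; auto. apply tends_const.
  apply tends_minus; auto. apply tends_const. apply (T_U f c h D); auto.
Qed.

Lemma T_Dfun f c h D m0 : ctx f c h D -> inSq m0 -> cdf f m0 < 1 ->
  tends (nrpt m0) inSq (Dfun f c h) (Dfun f c h m0).
Proof.
  intros X H U. assert (M := nmono_pt m0). unfold Dfun.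
  apply tends_minus; auto. apply tends_mult; auto. apply tends_mult; auto.
  apply (T_nn f c h D); auto. apply tends_const. apply tends_minus; auto.
  apply (T_wt f c h D); auto. apply tends_const.
  apply tends_minus; auto. apply (T_wb f c h D); auto. apply tends_const.
Qed.

Lemma T_P1 f c h D m0 : ctx f c h D -> inSq m0 ->
  tends (nrpt m0) inSq (fun y => Rmax (cdf f h) (Rmax (wb f c h y) (wt f c h y)))
    (Rmax (cdf f h) (Rmax (wb f c h m0) (wt f c h m0))).
Proof.
  intros X H. assert (M := nmono_pt m0).
  apply tends_max; auto. apply tends_const. apply tends_max; auto.
  apply (T_wb f c h D); auto. apply (T_wt f c h D); auto.
Qed.

Lemma E_pos f c h D y : ctx f c h D -> inSq y -> 0 < 1 - c * aa f c h * (1 - cdf f y).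
Proof.
  intros X Hy. assert (UB := U_bounds f c h D y X Hy). assert (S := s0_bounds f c h D X).
  assert (Hc := cx_c _ _ _ _ X). unfold aa.
  assert (0 < c * (1 - cdf f h) < 1) by (split; nra).
  assert (c * (c * (1 - cdf f h)) < 1) by nra.
  assert (0 <= 1 - cdf f y <= 1) by (split; lra). assert (0 <= c * (c * (1 - cdf f h))) by nra. nra.
Qed.

Lemma T_Q2 f c h D m0 : ctx f c h D -> inSq m0 -> tends (nrpt m0) inSq (Q2 f c h) (Q2 f c h m0).
Proof.
  intros X H. assert (M := nmono_pt m0). unfold Q2.
  assert (EP := E_pos f c h D m0 X H).
  apply tends_div; auto. apply Rgt_not_eq; lra. apply tends_mult; auto. apply (T_V f c h D); auto. apply tends_const.
  apply tends_minus; auto. apply tends_const. apply tends_mult; auto. apply tends_const.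
  apply tends_minus; auto. apply tends_const. apply (T_U f c h D); auto.
Qed.

Lemma T_R2 f c h D m0 : ctx f c h D -> inSq m0 -> tends (nrpt m0) inSq (R2 f c h) (R2 f c h m0).
Proof.
  intros X H. assert (M := nmono_pt m0). unfold R2.
  assert (EP := E_pos f c h D m0 X H).
  apply tends_div; auto. apply Rgt_not_eq; lra. apply tends_mult; auto. apply (T_V f c h D); auto.
  apply tends_minus; auto. apply tends_const. apply tends_mult; auto. apply tends_const.
  apply tends_minus; auto. apply tends_const. apply (T_U f c h D); auto.
  apply tends_minus; auto. apply tends_const. apply tends_mult; auto. apply tends_const.
  apply tends_minus; auto. apply tends_const. apply (T_U f c h D); auto.
Qed.

Lemma T_r3 f c h D m0 : ctx f c h D -> inSq m0 -> tends (nrpt m0) inSq (r3 f c h) (r3 f c h m0).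
Proof.
  intros X H. assert (M := nmono_pt m0). unfold r3.
  apply tends_minus; auto. apply (T_V f c h D); auto. apply tends_mult; auto. apply tends_const.
  apply tends_mult; auto. apply tends_const.
  apply tends_minus; auto. apply tends_const. apply (T_U f c h D); auto.
Qed.

Definition clos (C : pt -> Prop) (m0 : pt) :=
  forall d, 0 < d -> exists y, inSq y /\ C y /\ near_pt d m0 y.

Lemma absent_of_not_clos C m0 g L : ~ clos C m0 ->
  tends (nrpt m0) (fun y => inSq y /\ C y) g L.
Proof.
  intro N. apply tends_absent. apply NNPP. intro N2. apply N. intros d Hd.
  apply NNPP. intro N3. apply N2. exists d; split; auto. intros y [Hy Cy] Ny.
  apply N3. exists y; auto.
Qed.

Lemma clos_ge0 m0 C g L : tends (nrpt m0) inSq g L -> clos C m0 ->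
  (forall y, inSq y -> C y -> 0 <= g y) -> 0 <= L.
Proof.
  intros T Cl P. apply (tends_ge0 _ _ _ _ T). intros d Hd.
  destruct (Cl d Hd) as [y [Hy [Cy Ny]]]. exists y; split; [auto| split; [exact Ny| apply P; auto]].
Qed.

Lemma assemble (w g1 g2 g3 : pt -> R) (C1 C2 C3 : pt -> Prop) m0 :
  (forall y, inSq y -> (C1 y /\ w y = g1 y) \/ (C2 y /\ w y = g2 y) \/ (C3 y /\ w y = g3 y)) ->
  tends (nrpt m0) (fun y => inSq y /\ C1 y) g1 (w m0) ->
  tends (nrpt m0) (fun y => inSq y /\ C2 y) g2 (w m0) ->
  tends (nrpt m0) (fun y => inSq y /\ C3 y) g3 (w m0) -> cont_at w m0.
Proof.
  intros Dec T1 T2 T3 e He.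
  destruct (T1 e He) as [d1 [Hd1 P1]]. destruct (T2 e He) as [d2 [Hd2 P2]].
  destruct (T3 e He) as [d3 [Hd3 P3]].
  exists (Rmin d1 (Rmin d2 d3)). split. repeat apply Rmin_glb_lt; auto.
  intros y Hy [N1 N2].
  assert (A1 : Rmin d1 (Rmin d2 d3) <= d1) by apply Rmin_l.
  assert (A2 : Rmin d1 (Rmin d2 d3) <= d2) by (eapply Rle_trans; [apply Rmin_r| apply Rmin_l]).
  assert (A3 : Rmin d1 (Rmin d2 d3) <= d3) by (eapply Rle_trans; [apply Rmin_r| apply Rmin_r]).
  destruct (Dec y Hy) as [[C E]|[[C E]|[C E]]]; rewrite E.
  - apply P1; [split; auto| split; lra].
  - apply P2; [split; auto| split; lra].
  - apply P3; [split; auto| split; lra].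
Qed.

Lemma Rb_open f c h D m0 : ctx f c h D -> Rb f c h m0 ->
  exists d, 0 < d /\ forall y, inSq y -> near_pt d m0 y -> Rb f c h y.
Proof.
  intros X R. assert (H := proj1 R). assert (M := nmono_pt m0).
  destruct (tends_eventually_pos (nrpt m0) inSq (fun y => wb f c h y - Rmax (cdf f h) (wt f c h y))
     (wb f c h m0 - Rmax (cdf f h) (wt f c h m0))) as [d [Hd P]].
  - destruct R as [_ R]. unfold ws in R. lra.
  - apply tends_minus; auto. apply (T_wb f c h D); auto. apply tends_max; auto. apply tends_const.
    apply (T_wt f c h D); auto.
  - exists d; split; auto. intros y Hy N. split; auto. specialize (P y Hy N). unfold ws. lra.
Qed.

Lemma nK_open f c h D mu m0 : ctx f c h D -> inSq m0 -> cdf f m0 < 1 -> ~ KK f c mu m0 ->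
  exists d, 0 < d /\ forall y, inSq y -> near_pt d m0 y -> ~ KK f c mu y.
Proof.
  intros X H U NK. assert (M := nmono_pt m0).
  assert (L : mu < nn f c m0). { apply Rnot_ge_lt. intro G. apply NK. split; auto. }
  destruct (tends_eventually_pos (nrpt m0) inSq (fun y => nn f c y - mu) (nn f c m0 - mu)) as [d [Hd P]].
  lra. apply tends_minus; auto. apply (T_nn f c h D); auto. apply tends_const.
  exists d; split; auto. intros y Hy N [_ [_ G]]. specialize (P y Hy N). lra.
Qed.

Lemma BB_open f c h D mu m0 : ctx f c h D -> BB f c h mu m0 ->
  exists d, 0 < d /\ forall y, inSq y -> near_pt d m0 y -> BB f c h mu y.
Proof.
  intros X [R NK]. assert (U := Rb_lt1 f c h D m0 X R).
  destruct (Rb_open f c h D m0 X R) as [d1 [Hd1 P1]].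
  destruct (nK_open f c h D mu m0 X (proj1 R) U NK) as [d2 [Hd2 P2]].
  exists (Rmin d1 d2). split. apply Rmin_glb_lt; auto.
  intros y Hy [N1 N2]. split.
  apply P1; auto; split; eapply Rlt_le_trans; eauto; apply Rmin_l.
  apply P2; auto; split; eapply Rlt_le_trans; eauto; apply Rmin_r.
Qed.

Lemma K_closed f c h D mu m0 : ctx f c h D -> inSq m0 -> clos (KK f c mu) m0 -> KK f c mu m0.
Proof.
  intros X H Cl. assert (M := nmono_pt m0). assert (Hc := cx_c _ _ _ _ X).
  assert (G : 0 <= mu * (c * (1 - cdf f m0)) - 1).
  { apply (clos_ge0 m0 (KK f c mu) (fun y => mu * (c * (1 - cdf f y)) - 1)); auto.
    - apply tends_minus; auto. apply tends_mult; auto. apply tends_const.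
      apply tends_mult; auto. apply tends_const. apply tends_minus; auto. apply tends_const.
      apply (T_U f c h D); auto. apply tends_const.
    - intros y Hy [_ [U K]]. unfold nn in K.
      assert (0 < c * (1 - cdf f y)) by nra.
      apply (Rmult_ge_compat_r (c * (1 - cdf f y))) in K; [|lra].
      rewrite Rinv_l in K by lra. lra. }
  assert (UB := U_bounds f c h D m0 X H).
  assert (U : cdf f m0 < 1).
  { destruct (Req_dec (cdf f m0) 1) as [E|E]; [|lra]. rewrite E in G. lra. }
  split; auto. split; auto. unfold nn.
  assert (0 < c * (1 - cdf f m0)) by nra.
  apply Rle_ge. apply (Rmult_le_reg_r (c * (1 - cdf f m0))); auto.
  rewrite Rinv_l by lra. lra.
Qed.

Lemma u1_noRb f c h D m0 : ctx f c h D -> inSq m0 -> cdf f m0 = 1 -> ~ clos (Rb f c h) m0.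
Proof.
  intros X H E Cl. assert (M := nmono_pt m0). assert (S := s0_bounds f c h D X).
  assert (W := T_wb f c h D m0 X H). rewrite (wb_1 f c h m0 E) in W.
  destruct (W (cdf f h)) as [d' [Hd' P]]; [lra|].
  destruct (Cl d' Hd') as [y [Hy [R Ny]]].
  assert (Q := P y Hy Ny). apply Rabs_def2 in Q. destruct (Rb_wb f c h y R). lra.
Qed.

Lemma cont_gen f c h D mu (w g1 g2 g3 : pt -> R) m0 :
  ctx f c h D -> inSq m0 ->
  ~ (sq_boundary (KK f c mu) m0 /\ sq_interior (Rb f c h) m0) ->
  (forall y, inSq y -> (~ BB f c h mu y /\ w y = g1 y) \/
       (BB f c h mu y /\ Rm f c h y /\ w y = g2 y) \/
       (BB f c h mu y /\ ~ Rm f c h y /\ w y = g3 y)) ->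
  tends (nrpt m0) inSq g1 (g1 m0) ->
  tends (nrpt m0) inSq g2 (g2 m0) ->
  tends (nrpt m0) inSq g3 (g3 m0) ->
  (cdf f m0 < 1 -> Dfun f c h m0 = 0 -> g2 m0 = g3 m0) ->
  (cdf f m0 < 1 -> wb f c h m0 = wt f c h m0 -> cdf f h <= wb f c h m0 -> g2 m0 = g1 m0) ->
  (cdf f m0 < 1 -> wb f c h m0 = cdf f h -> wt f c h m0 <= wb f c h m0 -> g3 m0 = g1 m0) ->
  cont_at w m0.
Proof.
  intros X H NB Dec T1 T2 T3 V23 V21 V31.
  assert (M := nmono_pt m0). assert (S := s0_bounds f c h D X).
  apply (assemble w g1 g2 g3 (fun y => ~ BB f c h mu y) (fun y => BB f c h mu y /\ Rm f c h y)
    (fun y => BB f c h mu y /\ ~ Rm f c h y)).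
  { intros y Hy. destruct (Dec y Hy) as [[A B]|[[A [B C]]|[A [B C]]]]; [left|right;left|right;right]; auto. }
  - destruct (classic (BB f c h mu m0)) as [B0|B0].
    + destruct (BB_open f c h D mu m0 X B0) as [d [Hd P]]. apply tends_absent.
      exists d; split; auto. intros y [Hy NBy] Ny. apply NBy; auto.
    + destruct (Dec m0 H) as [[_ E]|[[A _]|[A _]]]; [|contradiction|contradiction].
      rewrite E. apply (tends_sub _ inSq); [intros y [Hy _]; auto| auto].
  - destruct (classic (clos (fun y => BB f c h mu y /\ Rm f c h y) m0)) as [Cl|Cl];
      [|apply absent_of_not_clos; auto].
    assert (G : 0 <= Dfun f c h m0 /\ cdf f m0 < 1).
    { assert (U : cdf f m0 < 1).
      { destruct (Req_dec (cdf f m0) 1) as [E|E].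
        - exfalso. apply (u1_noRb f c h D m0 X H E). intros d Hd.
          destruct (Cl d Hd) as [y [Hy [[[R _] _] Ny]]]. exists y; auto.
        - generalize (U_bounds f c h D m0 X H); lra. }
      split; auto. apply (clos_ge0 m0 _ _ _ (T_Dfun f c h D m0 X H U) Cl).
      intros y Hy [_ R]. apply Rm_iff in R. tauto. }
    destruct G as [G U].
    apply (tends_sub _ inSq); [intros y [Hy _]; auto|].
    destruct (Dec m0 H) as [[NB0 E]|[[B0 [R0 E]]|[B0 [R0 E]]]]; rewrite E.
    +
      assert (NRb : ~ Rb f c h m0).
      { intro R. apply NB. split; [split|].
        - split; auto. intros d Hd.
          assert (K0 : KK f c mu m0) by (apply NNPP; intro NK; apply NB0; split; auto).
          exists m0; split; [auto| split; [exact K0| split; rewrite Rminus_diag, Rabs_R0; lra]].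
        - split; auto. intros d Hd. destruct (Cl d Hd) as [y [Hy [[[_ NK] _] Ny]]]. exists y.
          split; auto. split; auto. split; auto.
        - split; auto. apply (Rb_open f c h D m0 X R). }
      assert (Gb : 0 <= wb f c h m0 - Rmax (cdf f h) (wt f c h m0)).
      { refine (clos_ge0 m0 _ (fun y => wb f c h y - Rmax (cdf f h) (wt f c h y)) _ _ Cl _).
        apply tends_minus; auto. apply (T_wb f c h D); auto. apply tends_max; auto.
        apply tends_const. apply (T_wt f c h D); auto.
        intros y Hy [[R _] _]. destruct R as [_ R]. unfold ws in R. lra. }
      assert (Le : wb f c h m0 <= Rmax (cdf f h) (wt f c h m0)).
      { apply Rnot_lt_le. intro L. apply NRb. split; auto. }
      assert (NG := N_gt1 f c h D m0 X H U).
      assert (Hwb : wb f c h m0 = wt f c h m0).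
      { unfold Rmax in *. destruct (Rle_dec (cdf f h) (wt f c h m0)); [lra|].
        exfalso. unfold Dfun, ws in G. assert (wb f c h m0 = cdf f h) by lra.
        rewrite H0 in G. nra. }
      rewrite <- V21; auto. generalize (Rmax_l (cdf f h) (wt f c h m0)); lra.
    + auto.
    + exfalso. apply R0. apply Rm_iff; auto.
  - destruct (classic (clos (fun y => BB f c h mu y /\ ~ Rm f c h y) m0)) as [Cl|Cl];
      [|apply absent_of_not_clos; auto].
    assert (G : Dfun f c h m0 <= 0 /\ cdf f m0 < 1).
    { assert (U : cdf f m0 < 1).
      { destruct (Req_dec (cdf f m0) 1) as [E|E].
        - exfalso. apply (u1_noRb f c h D m0 X H E). intros d Hd.
          destruct (Cl d Hd) as [y [Hy [[[R _] _] Ny]]]. exists y; auto.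
        - generalize (U_bounds f c h D m0 X H); lra. }
      split; auto.
      assert (0 <= 0 - Dfun f c h m0); [|lra].
      refine (clos_ge0 m0 _ (fun y => 0 - Dfun f c h y) _ _ Cl _).
      apply tends_minus; auto. apply tends_const. apply (T_Dfun f c h D); auto.
      intros y Hy [_ R]. assert (~ (0 <= Dfun f c h y)) by (intro Q; apply R; apply Rm_iff; auto). lra. }
    destruct G as [G U].
    apply (tends_sub _ inSq); [intros y [Hy _]; auto|].
    destruct (Dec m0 H) as [[NB0 E]|[[B0 [R0 E]]|[B0 [R0 E]]]]; rewrite E.
    + assert (NRb : ~ Rb f c h m0).
      { intro R. apply NB. split; [split|].
        - split; auto. intros d Hd.
          assert (K0 : KK f c mu m0) by (apply NNPP; intro NK; apply NB0; split; auto).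
          exists m0; split; [auto| split; [exact K0| split; rewrite Rminus_diag, Rabs_R0; lra]].
        - split; auto. intros d Hd. destruct (Cl d Hd) as [y [Hy [[[_ NK] _] Ny]]]. exists y.
          split; auto. split; auto. split; auto.
        - split; auto. apply (Rb_open f c h D m0 X R). }
      assert (Gb : 0 <= wb f c h m0 - Rmax (cdf f h) (wt f c h m0)).
      { refine (clos_ge0 m0 _ (fun y => wb f c h y - Rmax (cdf f h) (wt f c h y)) _ _ Cl _).
        apply tends_minus; auto. apply (T_wb f c h D); auto. apply tends_max; auto.
        apply tends_const. apply (T_wt f c h D); auto.
        intros y Hy [[R _] _]. destruct R as [_ R]. unfold ws in R. lra. }
      assert (Le : wb f c h m0 <= Rmax (cdf f h) (wt f c h m0)).
      { apply Rnot_lt_le. intro L. apply NRb. split; auto. }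
      assert (NG := N_gt1 f c h D m0 X H U).
      assert (Hwb : wb f c h m0 = cdf f h).
      { unfold Rmax in *. destruct (Rle_dec (cdf f h) (wt f c h m0)); [|lra].
        unfold Dfun, ws in G. assert (E0 : wb f c h m0 = wt f c h m0) by lra.
        rewrite E0 in G. assert (wt f c h m0 - cdf f h <= 0) by (apply Rnot_lt_le; intro; nra).
        lra. }
      rewrite <- V31; auto. generalize (Rmax_r (cdf f h) (wt f c h m0)); lra.
    + assert (Dfun f c h m0 = 0). { apply Rm_iff in R0. lra. }
      rewrite V23; auto.
    + auto.
Qed.

Lemma part1_w f c h D mu m : ctx f c h D -> inSq m ->
  ~ (sq_boundary (KK f c mu) m /\ sq_interior (Rb f c h) m) -> cont_at (wstar f c h mu) m.
Proof.
  intros X H NB.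
  apply (cont_gen f c h D mu _ (fun y => Rmax (cdf f h) (Rmax (wb f c h y) (wt f c h y)))
     (Q2 f c h) (fun _ => cdf f h) m X H NB).
  - intros y Hy. destruct (classic (BB f c h mu y)) as [B|B].
    + destruct (classic (Rm f c h y)) as [R|R].
      * right; left. split; auto. split; auto. apply (w_Q2 f c h D); auto.
      * right; right. split; auto. split; auto. apply w_s0; auto.
    + left. split; auto. apply w_P1; auto.
  - apply (T_P1 f c h D); auto.
  - apply (T_Q2 f c h D); auto.
  - apply tends_const.
  - intros U E. destruct (ident_w f c h D m X H U) as [A _]. rewrite E in A. unfold Rdiv in A. lra.
  - intros U E L. destruct (ident_w f c h D m X H U) as [_ A]. rewrite E in A.
    unfold Rdiv in A. rewrite Rminus_diag, Rmult_0_r, Rmult_0_l in A.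
    rewrite <- E. unfold Rmax; repeat destruct Rle_dec; lra.
  - intros U E L. unfold Rmax; repeat destruct Rle_dec; lra.
Qed.

Lemma part1_r f c h D mu m : ctx f c h D -> inSq m ->
  ~ (sq_boundary (KK f c mu) m /\ sq_interior (Rb f c h) m) -> cont_at (rstar f c h mu) m.
Proof.
  intros X H NB.
  apply (cont_gen f c h D mu _ (cdf f) (R2 f c h) (r3 f c h) m X H NB).
  - intros y Hy. destruct (classic (BB f c h mu y)) as [B|B].
    + destruct (classic (Rm f c h y)) as [R|R].
      * right; left. split; auto. split; auto. apply (r_R2 f c h D); auto.
      * right; right. split; auto. split; auto. apply r_r3; auto.
    + left. split; auto. apply r_U; auto.
  - apply (T_U f c h D); auto.
  - apply (T_R2 f c h D); auto.
  - apply (T_r3 f c h D); auto.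
  - intros U E. destruct (ident_r f c h D m X H U) as [A _]. rewrite E in A. unfold Rdiv in A. lra.
  - intros U E L. destruct (ident_r f c h D m X H U) as [_ [A _]]. rewrite E in A.
    unfold Rdiv in A. rewrite Rminus_diag, Rmult_0_r, Rmult_0_l in A. lra.
  - intros U E L. destruct (ident_r f c h D m X H U) as [_ [_ A]]. rewrite E in A.
    unfold Rdiv in A. rewrite Rminus_diag, Rmult_0_l in A. lra.
Qed.

Lemma near_min1 d1 d2 m y : near_pt (Rmin d1 d2) m y -> near_pt d1 m y.
Proof. intros [A B]. split; eapply Rlt_le_trans; eauto; apply Rmin_l. Qed.
Lemma near_min2 d1 d2 m y : near_pt (Rmin d1 d2) m y -> near_pt d2 m y.
Proof. intros [A B]. split; eapply Rlt_le_trans; eauto; apply Rmin_r. Qed.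

Lemma part1_disc f c h D mu m0 : ctx f c h D -> sq_boundary (KK f c mu) m0 ->
  sq_interior (Rb f c h) m0 ->
  limsup_lt (compl (KK f c mu)) (wstar f c h mu) m0 (wstar f c h mu m0) /\
  liminf_gt (compl (KK f c mu)) (rstar f c h mu) m0 (rstar f c h mu m0).
Proof.
  intros X [[H ClK] _] [_ [d1 [Hd1 P1]]].
  assert (K0 : KK f c mu m0).
  { apply (K_closed f c h D mu m0 X H). intros d Hd. destruct (ClK d Hd) as [y [A [B C]]]. exists y; auto. }
  assert (R0 : Rb f c h m0). { apply P1; auto. split; rewrite Rminus_diag, Rabs_R0; lra. }
  assert (NB0 : ~ BB f c h mu m0) by (intros [_ N]; contradiction).
  assert (U : cdf f m0 < 1) by (apply (Rb_lt1 f c h D); auto).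
  assert (S := s0_bounds f c h D X). assert (Hc := cx_c _ _ _ _ X).
  destruct (Rb_wb f c h m0 R0) as [W1 W2].
  assert (NG := N_gt1 f c h D m0 X H U).
  assert (Hnh : 0 < nn f c h) by (unfold nn; apply Rinv_0_lt_compat; nra).
  assert (Hnm : 0 < nn f c m0) by (unfold nn; apply Rinv_0_lt_compat; nra).
  assert (BBy : forall y, inSq y -> compl (KK f c mu) y -> near_pt d1 m0 y -> BB f c h mu y).
  { intros y Hy [_ NK] N. split; auto. }
  split.
  - rewrite w_P1 by auto.
    assert (Ew : Rmax (cdf f h) (Rmax (wb f c h m0) (wt f c h m0)) = wb f c h m0).
    { unfold Rmax; repeat destruct Rle_dec; lra. }
    rewrite Ew.
    destruct (ident_w f c h D m0 X H U) as [_ Iq].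
    set (q := Q2 f c h m0) in *.
    assert (Hq : wb f c h m0 - q > 0).
    { rewrite Iq. apply Rdiv_lt_0_compat; [|lra]. apply Rmult_lt_0_compat; lra. }
    set (mx := Rmax q (cdf f h)).
    assert (Hmx : mx < wb f c h m0) by (unfold mx, Rmax; destruct Rle_dec; lra).
    exists ((mx + wb f c h m0) / 2). split; [lra|].
    destruct (T_Q2 f c h D m0 X H ((wb f c h m0 - mx) / 2)) as [d2 [Hd2 P2]]; [lra|].
    exists (Rmin d1 d2). split; [apply Rmin_glb_lt; auto|].
    intros y Hy Ky _ N. assert (B := BBy y Hy Ky (near_min1 _ _ _ _ N)).
    destruct (classic (Rm f c h y)) as [R|R].
    + rewrite (w_Q2 f c h D) by auto. specialize (P2 y Hy (near_min2 _ _ _ _ N)).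
      apply Rabs_def2 in P2. fold q in P2. generalize (Rmax_l q (cdf f h)). fold mx. lra.
    + rewrite w_s0 by auto. generalize (Rmax_r q (cdf f h)). fold mx. lra.
  - rewrite r_U by auto.
    destruct (ident_r f c h D m0 X H U) as [_ [I2 I3]].
    assert (A2 : R2 f c h m0 - cdf f m0 > 0).
    { rewrite I2. apply Rdiv_lt_0_compat; [|lra]. apply Rmult_lt_0_compat; lra. }
    assert (A3 : r3 f c h m0 - cdf f m0 > 0).
    { rewrite I3. apply Rdiv_lt_0_compat; lra. }
    set (mn := Rmin (R2 f c h m0) (r3 f c h m0)).
    assert (Hmn : cdf f m0 < mn) by (unfold mn, Rmin; destruct Rle_dec; lra).
    exists ((mn + cdf f m0) / 2). split; [lra|].
    destruct (T_R2 f c h D m0 X H ((mn - cdf f m0) / 2)) as [d2 [Hd2 P2]]; [lra|].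
    destruct (T_r3 f c h D m0 X H ((mn - cdf f m0) / 2)) as [d3 [Hd3 P3]]; [lra|].
    exists (Rmin d1 (Rmin d2 d3)). split; [repeat apply Rmin_glb_lt; auto|].
    intros y Hy Ky _ N. assert (B := BBy y Hy Ky (near_min1 _ _ _ _ N)).
    assert (N' := near_min2 _ _ _ _ N).
    destruct (classic (Rm f c h y)) as [R|R].
    + rewrite (r_R2 f c h D) by auto. specialize (P2 y Hy (near_min1 _ _ _ _ N')).
      apply Rabs_def2 in P2. generalize (Rmin_l (R2 f c h m0) (r3 f c h m0)). fold mn. lra.
    + rewrite r_r3 by auto. specialize (P3 y Hy (near_min2 _ _ _ _ N')).
      apply Rabs_def2 in P3. generalize (Rmin_r (R2 f c h m0) (r3 f c h m0)). fold mn. lra.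
Qed.

Definition DomL i m := fun t => t <> 0 /\ inSq (shift i m t).

Lemma pderiv_of_tends g i m d :
  tends nrR (DomL i m) (fun t => (g (shift i m t) - g m) / t) d -> has_pderiv g i m d.
Proof.
  intros T e He. destruct (T e He) as [del [Hd P]]. exists del; split; auto.
  intros t Ht Htd Hs. apply P; [split; auto| exact Htd].
Qed.

Lemma shift_near i m t d : Rabs t < d -> near_pt d m (shift i m t).
Proof.
  intros H. assert (0 < d) by (generalize (Rabs_pos t); lra).
  destruct i; split; simpl; try (replace (fst m + t - fst m) with t by ring);
    try (replace (snd m + t - snd m) with t by ring); auto;
    rewrite Rminus_diag, Rabs_R0; auto.
Qed.

Lemma interior_line S i m : sq_interior S m ->
  exists d, 0 < d /\ forall t, inSq (shift i m t) -> Rabs t < d -> S (shift i m t).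
Proof.
  intros [_ [d [Hd P]]]. exists d; split; auto. intros t Hs Ht. apply P; auto. apply shift_near; auto.
Qed.

Lemma interior_self S m : sq_interior S m -> S m.
Proof. intros [H [d [Hd P]]]. apply P; auto. split; rewrite Rminus_diag, Rabs_R0; lra. Qed.

Lemma tends_id_R (Dom : R -> Prop) : tends nrR Dom (fun t => t) 0.
Proof. intros e He. exists e; split; auto. intros y _ Hy. unfold nrR in Hy. rewrite Rminus_0_r. auto. Qed.

Lemma deriv_cont (Dom : R -> Prop) (phi : R -> R) phi0 d : (forall t, Dom t -> t <> 0) ->
  tends nrR Dom (fun t => (phi t - phi0) / t) d -> tends nrR Dom phi phi0.
Proof.
  intros Hz T. assert (M := nmono_R).
  assert (A := tends_plus _ _ _ _ _ _ M (tends_const nrR Dom phi0)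
     (tends_mult _ _ _ _ _ _ M (tends_id_R Dom) T)).
  eapply tends_ext; [| |exact A]. intros t Dt. simpl. field. apply Hz; auto. ring.
Qed.

Lemma dU f c h D i m : ctx f c h D -> inSq m ->
  tends nrR (DomL i m) (fun t => (cdf f (shift i m t) - cdf f m) / t) (D i m).
Proof. intros X H. apply (Fk_der _ _ (cx_F _ _ _ _ X)); auto. Qed.

Lemma coord_vee i m h : coord i (vee m h) = Rmax (coord i m) (coord i h).
Proof. destruct i; auto. Qed.
Lemma coord_vee_o i m h : coord (other i) (vee m h) = Rmax (coord (other i) m) (coord (other i) h).
Proof. destruct i; auto. Qed.

Lemma vee_shift_lt i m h t : coord i m + t < coord i h -> coord i m < coord i h ->
  vee (shift i m t) h = vee m h.
Proof.
  intros A B. destruct i; unfold vee, shift; simpl in *; f_equal;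
  rewrite !Rmax_right; lra.
Qed.

Lemma vee_shift_gt i m h t : coord i m + t > coord i h -> coord i m > coord i h ->
  vee (shift i m t) h = shift i (vee m h) t.
Proof.
  intros A B. destruct i; unfold vee, shift; simpl in *; f_equal;
  rewrite !Rmax_left; lra.
Qed.

Lemma dV_lt f c h D i m : ctx f c h D -> inSq m -> coord i m < coord i h ->
  tends nrR (DomL i m) (fun t => (cdf f (vee (shift i m t) h) - cdf f (vee m h)) / t) 0.
Proof.
  intros X H L. apply (tends_ext_near _ _ (fun _ => 0)); [apply nmono_R| |apply tends_const].
  exists (coord i h - coord i m). split; [lra|]. intros t [Ht _] Htd. unfold nrR in Htd.
  rewrite vee_shift_lt; auto. unfold Rdiv; ring. apply Rabs_def2 in Htd. lra.
Qed.

Lemma dV_gt f c h D i m : ctx f c h D -> inSq m -> coord i m > coord i h ->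
  tends nrR (DomL i m) (fun t => (cdf f (vee (shift i m t) h) - cdf f (vee m h)) / t) (D i (vee m h)).
Proof.
  intros X H L.
  assert (T := Fk_der _ _ (cx_F _ _ _ _ X) i (vee m h) (vee_sq f c h D m X H)).
  apply (tends_ext_near _ _ (fun t => (cdf f (shift i (vee m h) t) - cdf f (vee m h)) / t));
    [apply nmono_R| |].
  - exists (coord i m - coord i h). split; [lra|]. intros t [Ht _] Htd. unfold nrR in Htd.
    rewrite vee_shift_gt; auto. apply Rabs_def2 in Htd. lra.
  - apply (tends_sub _ (fun t => t <> 0 /\ inSq (shift i (vee m h) t))); auto.
    intros t [Ht Hs]. split; auto.
    assert (Hh := cx_h _ _ _ _ X). assert (Hv := vee_sq f c h D m X H).
    destruct i; destruct Hs as [[A B] [C E]]; destruct Hv as [[A' B'] [C' E']];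
      split; simpl in *; split; auto; unfold Rmax in *; repeat destruct Rle_dec; lra.
Qed.

Lemma piece_t (Dom : R -> Prop) U V u0 v0 du dv a :
  tends nrR Dom (fun t => (U t - u0) / t) du -> tends nrR Dom (fun t => (V t - v0) / t) dv ->
  (forall t, Dom t -> t <> 0) ->
  tends nrR Dom (fun t => ((V t - U t * a) - (v0 - u0 * a)) / t) (dv - a * du).
Proof.
  intros TU TV Hz. assert (M := nmono_R).
  assert (A := tends_minus _ _ _ _ _ _ M TV (tends_mult _ _ _ _ _ _ M (tends_const nrR Dom a) TU)).
  eapply tends_ext; [| |exact A]; auto. intros t Dt. simpl. field. auto.
Qed.

Lemma piece_b (Dom : R -> Prop) U V u0 v0 du dv c :
  tends nrR Dom (fun t => (U t - u0) / t) du -> tends nrR Dom (fun t => (V t - v0) / t) dv ->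
  (forall t, Dom t -> t <> 0) -> 0 < c -> u0 < 1 ->
  (exists d0, 0 < d0 /\ forall t, Dom t -> nrR d0 t -> U t <> 1) ->
  tends nrR Dom (fun t => ((V t - U t) / (c * (1 - U t)) - (v0 - u0) / (c * (1 - u0))) / t)
    (dv / (c * (1 - u0)) + du * (v0 - 1) / (c * (1 - u0) * (1 - u0))).
Proof.
  intros TU TV Hz Hc Hu HU. assert (M := nmono_R).
  assert (CU := deriv_cont Dom U u0 du Hz TU).
  assert (Den : tends nrR Dom (fun t => c * (1 - U t)) (c * (1 - u0))).
  { apply tends_mult; auto. apply tends_const. apply tends_minus; auto. apply tends_const. }
  assert (N1 : c * (1 - u0) <> 0) by (apply Rgt_not_eq; nra).
  assert (N2 : c * (1 - u0) * (1 - u0) <> 0) by (apply Rgt_not_eq; apply Rmult_lt_0_compat; nra).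
  assert (A := tends_plus _ _ _ _ _ _ M
     (tends_div _ _ _ _ _ _ M N1 TV Den)
     (tends_div _ _ _ _ _ _ M N2
        (tends_mult _ _ _ _ _ _ M TU (tends_const nrR Dom (v0 - 1)))
        (tends_mult _ _ _ _ _ _ M Den (tends_const nrR Dom (1 - u0))))).
  eapply tends_ext_near; [exact M| |].
  2: { eapply tends_ext; [intros; reflexivity| |exact A]. simpl. unfold Rdiv. ring. }
  destruct HU as [d0 [Hd0 P]]. exists d0; split; auto. intros t Dt N.
  assert (t <> 0) by auto. assert (U t <> 1) by auto. simpl. field.
  repeat split; auto; try lra; intro Z; apply H0; lra.
Qed.

Lemma piece_2 (Dom : R -> Prop) U V u0 v0 du dv c a :
  tends nrR Dom (fun t => (U t - u0) / t) du -> tends nrR Dom (fun t => (V t - v0) / t) dv ->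
  (forall t, Dom t -> t <> 0) ->
  (forall t, Dom t -> 1 - c * a * (1 - U t) <> 0) -> 1 - c * a * (1 - u0) <> 0 ->
  tends nrR Dom (fun t => (V t * (1 - a) / (1 - c * a * (1 - U t)) -
                            v0 * (1 - a) / (1 - c * a * (1 - u0))) / t)
    ((1 - a) * dv / (1 - c * a * (1 - u0)) -
       (1 - a) * v0 * (c * a) * du / ((1 - c * a * (1 - u0)) * (1 - c * a * (1 - u0)))).
Proof.
  intros TU TV Hz HE HE0. assert (M := nmono_R).
  assert (CU := deriv_cont Dom U u0 du Hz TU).
  assert (Den : tends nrR Dom (fun t => 1 - c * a * (1 - U t)) (1 - c * a * (1 - u0))).
  { apply tends_minus; auto. apply tends_const. apply tends_mult; auto. apply tends_const.
    apply tends_minus; auto. apply tends_const. }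
  assert (N2 : (1 - c * a * (1 - u0)) * (1 - c * a * (1 - u0)) <> 0)
    by (apply Rmult_integral_contrapositive; split; auto).
  assert (A := tends_minus _ _ _ _ _ _ M
     (tends_div _ _ _ _ _ _ M HE0 (tends_mult _ _ _ _ _ _ M (tends_const nrR Dom (1 - a)) TV) Den)
     (tends_div _ _ _ _ _ _ M N2
        (tends_mult _ _ _ _ _ _ M (tends_const nrR Dom ((1 - a) * v0 * (c * a))) TU)
        (tends_mult _ _ _ _ _ _ M Den (tends_const nrR Dom (1 - c * a * (1 - u0)))))).
  eapply tends_ext; [| |exact A].
  - intros t Dt. assert (t <> 0) by auto. assert (1 - c * a * (1 - U t) <> 0) by auto.
    simpl. field. repeat split; auto.
  - reflexivity.
Qed.

Lemma pderiv_local g i m d (Phi : R -> R) phi0 :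
  (exists del, 0 < del /\ forall t, DomL i m t -> Rabs t < del -> g (shift i m t) = Phi t) ->
  g m = phi0 -> tends nrR (DomL i m) (fun t => (Phi t - phi0) / t) d -> has_pderiv g i m d.
Proof.
  intros [del [Hd P]] E T. apply pderiv_of_tends.
  apply (tends_ext_near _ _ (fun t => (Phi t - phi0) / t)); [apply nmono_R| |auto].
  exists del; split; auto. intros t Dt N. rewrite P, E; auto.
Qed.

Lemma region_line S i m (Q : pt -> Prop) g (Phi : pt -> R) : sq_interior S m ->
  (forall y, S y -> g y = Phi y) ->
  exists del, 0 < del /\ forall t, DomL i m t -> Rabs t < del -> g (shift i m t) = Phi (shift i m t).
Proof.
  intros I E. destruct (interior_line S i m I) as [d [Hd P]]. exists d; split; auto.
  intros t [_ Hs] Ht. apply E. apply P; auto.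
Qed.

Lemma w_on_Rs f c h mu y : Rs f c h y -> wstar f c h mu y = cdf f h.
Proof.
  intros [Hy R]. unfold ws in R. rewrite w_P1.
  - apply Rmax_left. lra.
  - intros [[_ B] _]. unfold ws in B.
    generalize (Rmax_l (cdf f h) (wt f c h y)) (Rmax_r (cdf f h) (wt f c h y))
      (Rmax_l (wb f c h y) (wt f c h y)). lra.
Qed.

Lemma w_on_Rt f c h mu y : Rt f c h y -> wstar f c h mu y = wt f c h y.
Proof.
  intros [Hy [NS NB]]. rewrite w_P1 by (intros [B _]; auto).
  assert (A : ~ (cdf f h >= Rmax (wb f c h y) (wt f c h y))) by (intro; apply NS; split; auto).
  assert (B : ~ (wb f c h y > Rmax (cdf f h) (wt f c h y))) by (intro; apply NB; split; auto).
  unfold Rmax in *; repeat destruct Rle_dec; lra.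
Qed.

Lemma w_on_RbK f c h D mu y : ctx f c h D -> Rb f c h y -> KK f c mu y ->
  wstar f c h mu y = (cdf f (vee y h) - cdf f y) / (c * (1 - cdf f y)).
Proof.
  intros X R K. rewrite w_P1 by (intros [_ NK]; auto).
  destruct (Rb_wb f c h y R) as [A B]. rewrite <- (wb_eq f c h y).
  unfold Rmax; repeat destruct Rle_dec; lra. apply (cx_c _ _ _ _ X).
  assert (U := Rb_lt1 f c h D y X R). lra.
Qed.

Lemma v0_lt1 f c h D i m : ctx f c h D -> inSq m -> coord i m < coord i h -> cdf f (vee m h) < 1.
Proof.
  intros X H L. apply (Fk_lt1 _ _ (cx_F _ _ _ _ X)). apply (vee_sq f c h D); auto.
  assert (Hh := cx_h _ _ _ _ X).
  destruct i; simpl in *; [left|right]; unfold Rmax; destruct Rle_dec; lra.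
Qed.

Lemma du_facts f c h D i m : ctx f c h D -> inSq m ->
  0 <= D i m /\ (coord (other i) m <> 0 -> 0 < D i m).
Proof.
  intros X H. split. apply (Dk_nonneg _ _ (cx_F _ _ _ _ X)); auto.
  apply (Dk_pos _ _ (cx_F _ _ _ _ X)); auto.
Qed.

Lemma dv_pos f c h D i m : ctx f c h D -> inSq m -> 0 < D i (vee m h).
Proof.
  intros X H. apply (Dk_pos _ _ (cx_F _ _ _ _ X)). apply (vee_sq f c h D); auto.
  rewrite coord_vee_o. assert (Hh := cx_h _ _ _ _ X).
  assert (0 < coord (other i) h) by (destruct i; simpl; lra).
  generalize (Rmax_r (coord (other i) m) (coord (other i) h)); lra.
Qed.

Lemma vee_coords i m h : coord i h <= coord i m -> coord (other i) h <= coord (other i) m -> vee m h = m.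
Proof. intros A B. apply vee_ge; destruct i; simpl in *; auto. Qed.

Lemma dv_ge f c h D i m : ctx f c h D -> inSq m -> coord i m > coord i h ->
  D i m <= D i (vee m h) /\ (coord (other i) m < coord (other i) h -> D i m < D i (vee m h)).
Proof.
  intros X H L.
  assert (S : forall _ : coord (other i) m < coord (other i) h, D i m < D i (vee m h)).
  { intros L2. apply (Dk_mono _ _ (cx_F _ _ _ _ X)); auto. apply (vee_sq f c h D); auto.
    rewrite coord_vee. rewrite Rmax_left; lra.
    rewrite coord_vee_o. rewrite Rmax_right; lra. }
  split; auto. destruct (Rlt_dec (coord (other i) m) (coord (other i) h)) as [L2|L2].
  left; auto. rewrite (vee_coords i m h); lra.
Qed.

Lemma Rb_other f c h D i m : ctx f c h D -> Rb f c h m -> coord i m > coord i h ->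
  coord (other i) m < coord (other i) h.
Proof.
  intros X R L. apply Rnot_le_lt. intro L2.
  destruct (Rb_wb f c h m R) as [A _]. assert (S := s0_bounds f c h D X).
  assert (E : wb f c h m = 0) by (apply wb_zero_ge; [apply (cx_c _ _ _ _ X)| |];
    destruct i; simpl in *; lra).
  lra.
Qed.

Lemma part2_s f c h D mu i m : ctx f c h D -> sq_interior (Rs f c h) m ->
  has_pderiv (wstar f c h mu) i m 0.
Proof.
  intros X I. apply (pderiv_local _ i m 0 (fun _ => cdf f h) (cdf f h)).
  - destruct (region_line _ i m (fun _ => True) (wstar f c h mu) (fun _ => cdf f h) I) as [d [Hd P]].
    intros y Y. apply w_on_Rs; auto. exists d; auto.
  - apply w_on_Rs. apply interior_self; auto.
  - apply (tends_ext _ _ (fun _ => 0) _ 0 0); [|reflexivity|apply tends_const].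
    intros t [Ht _]. cbv beta. unfold Rdiv. rewrite Rminus_diag. ring.
Qed.

Lemma deriv_Rt f c h D mu i m dv : ctx f c h D -> sq_interior (Rt f c h) m ->
  tends nrR (DomL i m) (fun t => (cdf f (vee (shift i m t) h) - cdf f (vee m h)) / t) dv ->
  has_pderiv (wstar f c h mu) i m (dv - c * (1 - cdf f h) * D i m).
Proof.
  intros X I TV. assert (H := proj1 I).
  set (Phi := fun y => cdf f (vee y h) - cdf f y * (c * (1 - cdf f h))).
  apply (pderiv_local _ i m _ (fun t => Phi (shift i m t)) (Phi m)).
  - apply (region_line (Rt f c h) i m (fun _ => True) _ Phi I). intros y Y. rewrite w_on_Rt; auto. apply wt_eq.
  - rewrite w_on_Rt by (apply interior_self; auto). apply wt_eq.
  - unfold Phi. apply piece_t; auto. apply (dU f c h D); auto. intros t [Ht _]; auto.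
Qed.

Lemma deriv_RbK f c h D mu i m dv : ctx f c h D -> sq_interior (inter (Rb f c h) (KK f c mu)) m ->
  tends nrR (DomL i m) (fun t => (cdf f (vee (shift i m t) h) - cdf f (vee m h)) / t) dv ->
  has_pderiv (wstar f c h mu) i m
    (dv / (c * (1 - cdf f m)) + D i m * (cdf f (vee m h) - 1) / (c * (1 - cdf f m) * (1 - cdf f m))).
Proof.
  intros X I TV. assert (H := proj1 I). assert (Hc := cx_c _ _ _ _ X).
  set (Phi := fun y => (cdf f (vee y h) - cdf f y) / (c * (1 - cdf f y))).
  assert (I0 := interior_self _ _ I). destruct I0 as [R0 K0].
  apply (pderiv_local _ i m _ (fun t => Phi (shift i m t)) (Phi m)).
  - apply (region_line _ i m (fun _ => True) _ Phi I). intros y [R K]. apply (w_on_RbK f c h D); auto.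
  - apply (w_on_RbK f c h D); auto.
  - unfold Phi. apply piece_b; auto. apply (dU f c h D); auto. intros t [Ht _]; auto. lra.
    apply (Rb_lt1 f c h D); auto.
    destruct (interior_line _ i m I) as [d [Hd P]]. exists d; split; auto.
    intros t [_ Hs] N. destruct (P t Hs N) as [R _]. assert (U := Rb_lt1 f c h D _ X R). lra.
Qed.

Lemma deriv_Q2 f c h D mu i m dv : ctx f c h D ->
  sq_interior (inter (Rb f c h) (inter (compl (KK f c mu)) (Rm f c h))) m ->
  tends nrR (DomL i m) (fun t => (cdf f (vee (shift i m t) h) - cdf f (vee m h)) / t) dv ->
  has_pderiv (wstar f c h mu) i m
    ((1 - aa f c h) * dv / (1 - c * aa f c h * (1 - cdf f m)) -
     (1 - aa f c h) * cdf f (vee m h) * (c * aa f c h) * D i m /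
       ((1 - c * aa f c h * (1 - cdf f m)) * (1 - c * aa f c h * (1 - cdf f m)))).
Proof.
  intros X I TV. assert (H := proj1 I). assert (Hc := cx_c _ _ _ _ X).
  assert (I0 := interior_self _ _ I). destruct I0 as [R0 [[_ K0] M0]].
  apply (pderiv_local _ i m _ (fun t => Q2 f c h (shift i m t)) (Q2 f c h m)).
  - apply (region_line _ i m (fun _ => True) _ (Q2 f c h) I). intros y [R [[_ K] M]].
    apply (w_Q2 f c h D); auto. split; auto.
  - apply (w_Q2 f c h D); auto. split; auto.
  - unfold Q2. apply piece_2; auto. apply (dU f c h D); auto. intros t [Ht _]; auto.
    intros t [_ Hs]. apply Rgt_not_eq. apply (E_pos f c h D); auto.
    apply Rgt_not_eq. apply (E_pos f c h D); auto.
Qed.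

Lemma v0_ge_s0 f c h D m : ctx f c h D -> inSq m -> cdf f h <= cdf f (vee m h).
Proof.
  intros X H. apply (Fk_mono _ _ (cx_F _ _ _ _ X)). apply (sq_h f c h D X). apply (vee_sq f c h D); auto.
  apply Rmax_r. apply Rmax_r.
Qed.

Lemma part2_lt f c h D mu i m : ctx f c h D ->
  union (sq_interior (Rt f c h)) (sq_interior (inter (Rb f c h) (KK f c mu))) m ->
  coord i m < coord i h ->
  exists d, has_pderiv (wstar f c h mu) i m d /\ d <= 0 /\ (coord (other i) m <> 0 -> d < 0).
Proof.
  intros X Un L. assert (S := s0_bounds f c h D X). assert (Hc := cx_c _ _ _ _ X).
  destruct Un as [I|I]; assert (H := proj1 I); destruct (du_facts f c h D i m X H) as [D0 D1].
  - eexists. split. apply (deriv_Rt f c h D mu i m 0 X I). apply (dV_lt f c h D); auto.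
    assert (0 < c * (1 - cdf f h)) by nra.
    split; [nra|]. intros N. specialize (D1 N). nra.
  - eexists. split. apply (deriv_RbK f c h D mu i m 0 X I). apply (dV_lt f c h D); auto.
    assert (R0 := proj1 (interior_self _ _ I)). assert (U := Rb_lt1 f c h D m X R0).
    assert (V := v0_lt1 f c h D i m X H L).
    assert (P : 0 < / (c * (1 - cdf f m) * (1 - cdf f m))).
    { apply Rinv_0_lt_compat. apply Rmult_lt_0_compat; nra. }
    unfold Rdiv. rewrite Rmult_0_l, Rplus_0_l. split; [|intros N; specialize (D1 N)].
    + assert (D i m * (cdf f (vee m h) - 1) <= 0) by nra. nra.
    + assert (D i m * (cdf f (vee m h) - 1) < 0) by nra. nra.
Qed.

Lemma part2_gt f c h D mu i m : ctx f c h D ->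
  union (sq_interior (Rt f c h)) (sq_interior (inter (Rb f c h) (KK f c mu))) m ->
  coord i m > coord i h ->
  exists d, has_pderiv (wstar f c h mu) i m d /\ d > 0.
Proof.
  intros X Un L. assert (S := s0_bounds f c h D X). assert (Hc := cx_c _ _ _ _ X).
  destruct Un as [I|I]; assert (H := proj1 I); destruct (du_facts f c h D i m X H) as [D0 D1];
    assert (DV := dv_pos f c h D i m X H); destruct (dv_ge f c h D i m X H L) as [G1 G2].
  - eexists. split. apply (deriv_Rt f c h D mu i m (D i (vee m h)) X I). apply (dV_gt f c h D); auto.
    assert (0 < c * (1 - cdf f h) < 1) by (split; nra). nra.
  - eexists. split. apply (deriv_RbK f c h D mu i m (D i (vee m h)) X I). apply (dV_gt f c h D); auto.
    assert (R0 := proj1 (interior_self _ _ I)). assert (U := Rb_lt1 f c h D m X R0).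
    assert (G := G2 (Rb_other f c h D i m X R0 L)).
    assert (UV := U_le_V f c h D m X H). assert (UB := U_bounds f c h D m X H).
    set (p := 1 - cdf f m) in *. set (v0 := cdf f (vee m h)) in *.
    assert (Hp : 0 < p) by (unfold p; lra).
    replace (D i (vee m h) / (c * p) + D i m * (v0 - 1) / (c * p * p))
      with ((p * (D i (vee m h) - D i m) + D i m * (v0 - cdf f m)) / (c * p * p))
      by (unfold p; field; split; lra).
    apply Rdiv_lt_0_compat. assert (0 <= D i m * (v0 - cdf f m)) by nra. nra.
    apply Rmult_lt_0_compat; nra.
Qed.

Lemma part2_a f c h D mu i m : ctx f c h D -> sq_interior (Rb f c h) m ->
  compl (KK f c mu) m -> compl (Rm f c h) m -> has_pderiv (wstar f c h mu) i m 0.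
Proof.
  intros X I [H NK] [_ NR]. assert (R0 := interior_self _ _ I). assert (U := Rb_lt1 f c h D m X R0).
  destruct (BB_open f c h D mu m X (conj R0 NK)) as [d1 [Hd1 P1]].
  assert (Dn : Dfun f c h m < 0).
  { apply Rnot_le_lt. intro G. apply NR. apply Rm_iff; auto. }
  destruct (tends_eventually_pos (nrpt m) inSq (fun y => 0 - Dfun f c h y) (0 - Dfun f c h m))
    as [d2 [Hd2 P2]]; [lra| |].
  { apply tends_minus. apply nmono_pt. apply tends_const. apply (T_Dfun f c h D); auto. }
  apply (pderiv_local _ i m 0 (fun _ => cdf f h) (cdf f h)).
  - exists (Rmin d1 d2). split. apply Rmin_glb_lt; auto. intros t [_ Hs] N.
    apply w_s0. apply P1; auto. apply shift_near; eapply Rlt_le_trans; eauto; apply Rmin_l.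
    intro R. apply Rm_iff in R. destruct R as [_ R].
    assert (Q := P2 (shift i m t) Hs (shift_near i m t d2 ltac:(eapply Rlt_le_trans; eauto; apply Rmin_r))).
    simpl in Q. lra.
  - apply w_s0; auto. split; auto.
  - apply (tends_ext _ _ (fun _ => 0) _ 0 0); [|reflexivity|apply tends_const].
    intros t [Ht _]. cbv beta. unfold Rdiv. rewrite Rminus_diag. ring.
Qed.

Lemma part2_b f c h D mu i m : ctx f c h D ->
  sq_interior (inter (Rb f c h) (inter (compl (KK f c mu)) (Rm f c h))) m ->
  coord i m < coord i h ->
  exists d, has_pderiv (wstar f c h mu) i m d /\ d <= 0 /\ (coord (other i) m <> 0 -> d < 0).
Proof.
  intros X I L. assert (S := s0_bounds f c h D X). assert (Hc := cx_c _ _ _ _ X).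
  assert (H := proj1 I). destruct (du_facts f c h D i m X H) as [D0 D1].
  eexists. split. apply (deriv_Q2 f c h D mu i m 0 X I). apply (dV_lt f c h D); auto.
  assert (E := E_pos f c h D m X H). assert (V := v0_ge_s0 f c h D m X H).
  unfold aa in *. set (E0 := 1 - c * (c * (1 - cdf f h)) * (1 - cdf f m)) in *.
  assert (P : 0 < / (E0 * E0)) by (apply Rinv_0_lt_compat; nra).
  assert (A : 0 < (1 - c * (1 - cdf f h)) * cdf f (vee m h) * (c * (c * (1 - cdf f h)))).
  { apply Rmult_lt_0_compat. apply Rmult_lt_0_compat; nra. apply Rmult_lt_0_compat; nra. }
  unfold Rdiv. rewrite Rmult_0_r, Rmult_0_l, Rminus_0_l.
  set (A0 := (1 - c * (1 - cdf f h)) * cdf f (vee m h) * (c * (c * (1 - cdf f h)))) in *.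
  split; [|intros N; specialize (D1 N)].
  - assert (0 <= A0 * D i m) by nra. assert (0 <= A0 * D i m * / (E0 * E0)) by nra. lra.
  - assert (0 < A0 * D i m) by nra. assert (0 < A0 * D i m * / (E0 * E0)) by nra. lra.
Qed.

Lemma c2_le c : 0 < c -> c <= sqrt 2 / 2 -> c * c <= 1 / 2.
Proof.
  intros Hc L. assert (E : sqrt 2 * sqrt 2 = 2) by (apply sqrt_sqrt; lra).
  assert (0 <= sqrt 2) by apply sqrt_pos. nra.
Qed.

Lemma part2_c f c h D mu i m : ctx f c h D ->
  sq_interior (inter (Rb f c h) (inter (compl (KK f c mu)) (Rm f c h))) m ->
  coord i m > coord i h -> c <= sqrt 2 / 2 ->
  exists d, has_pderiv (wstar f c h mu) i m d /\ d > 0.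
Proof.
  intros X I L Lc. assert (S := s0_bounds f c h D X). assert (Hc := cx_c _ _ _ _ X).
  assert (H := proj1 I). destruct (du_facts f c h D i m X H) as [D0 D1].
  assert (DV := dv_pos f c h D i m X H); destruct (dv_ge f c h D i m X H L) as [G1 G2].
  eexists. split. apply (deriv_Q2 f c h D mu i m (D i (vee m h)) X I). apply (dV_gt f c h D); auto.
  assert (E := E_pos f c h D m X H). assert (V := v0_ge_s0 f c h D m X H).
  assert (VB := V_bounds f c h D m X H). assert (UB := U_bounds f c h D m X H).
  assert (C2 := c2_le c ltac:(lra) Lc).
  unfold aa in *. set (a := c * (1 - cdf f h)) in *.
  set (E0 := 1 - c * a * (1 - cdf f m)) in *. set (v0 := cdf f (vee m h)) in *.
  set (du := D i m) in *. set (dv := D i (vee m h)) in *.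
  assert (Ha : 0 < a < c) by (unfold a; split; nra).
  assert (Hca : 0 < c * a < 1/2) by (split; nra).
  assert (K1 : E0 * dv - v0 * (c * a) * du >= dv * (1 - c * a * ((1 - cdf f m) + v0))).
  { unfold E0. assert (v0 * (c * a) * du <= v0 * (c * a) * dv).
    { apply Rmult_le_compat_l; auto. apply Rmult_le_pos; lra. } nra. }
  assert (K2 : 0 < 1 - c * a * ((1 - cdf f m) + v0)) by nra.
  assert (K3 : 0 < E0 * dv - v0 * (c * a) * du) by nra.
  replace ((1 - a) * dv / E0 - (1 - a) * v0 * (c * a) * du / (E0 * E0))
    with ((1 - a) * (E0 * dv - v0 * (c * a) * du) / (E0 * E0)) by (field; lra).
  apply Rdiv_lt_0_compat. apply Rmult_lt_0_compat; lra. nra.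
Qed.

Theorem proposition6 (f : R -> R -> R) (c mu : R) (h : pt)
  (Hfcont : cont_on_sq f)
  (Hfpos : forall x, inSq x -> 0 < f (fst x) (snd x))
  (Hmass : cdf f (1, 1) = 1)
  (Hc : 0 < c < 1)
  (Hh : 0 < fst h < 1 /\ 0 < snd h < 1)
  (Hmu : 0 < mu)
  (Hmuh : mu >= / nn f c h) :
  let w := wstar f c h mu in
  let r := rstar f c h mu in
  let K := KK f c mu in
  let RS := Rs f c h in
  let RB := Rb f c h in
  let RT := Rt f c h in
  let RM := Rm f c h in
  (* 1. continuity away from sq_boundary(K) /\ int(R_b) *)
  (forall m, inSq m -> ~ (sq_boundary K m /\ sq_interior RB m) ->
     cont_at w m /\ cont_at r m) /\
  (* 1. discontinuity on sq_boundary(K) /\ int(R_b) *)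
  (forall m0, sq_boundary K m0 -> sq_interior RB m0 ->
     limsup_lt (compl K) w m0 (w m0) /\ liminf_gt (compl K) r m0 (r m0)) /\
  (* 2. *)
  (forall i m, sq_interior RS m -> has_pderiv w i m 0) /\
  (forall i m, union (sq_interior RT) (sq_interior (inter RB K)) m ->
     coord i m < coord i h ->
     exists d, has_pderiv w i m d /\ d <= 0 /\ (coord (other i) m <> 0 -> d < 0)) /\
  (forall i m, union (sq_interior RT) (sq_interior (inter RB K)) m ->
     coord i m > coord i h ->
     exists d, has_pderiv w i m d /\ d > 0) /\
  (* 2(a) *)
  (forall i m, sq_interior RB m -> compl K m -> compl RM m -> has_pderiv w i m 0) /\
  (* 2(b) *)
  (forall i m, sq_interior (inter RB (inter (compl K) RM)) m ->
     coord i m < coord i h ->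
     exists d, has_pderiv w i m d /\ d <= 0 /\ (coord (other i) m <> 0 -> d < 0)) /\
  (* 2(c) *)
  (forall i m, sq_interior (inter RB (inter (compl K) RM)) m ->
     coord i m > coord i h -> c <= sqrt 2 / 2 ->
     exists d, has_pderiv w i m d /\ d > 0).
Proof.
  assert (Hf : fok f) by (split; auto).
  assert (X : ctx f c h (Dk f)) by (split; auto; apply cdf_Fok; auto).
  intros w r K RS RB RT RM.
  split; [|split; [|split; [|split; [|split; [|split; [|split]]]]]].
  - intros m H NB. split; [apply (part1_w f c h (Dk f)) | apply (part1_r f c h (Dk f))]; auto.
  - intros m0 B I. apply (part1_disc f c h (Dk f)); auto.
  - intros i m I. apply (part2_s f c h (Dk f)); auto.
  - intros i m U L. apply (part2_lt f c h (Dk f)); auto.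
  - intros i m U L. apply (part2_gt f c h (Dk f)); auto.
  - intros i m I A B. apply (part2_a f c h (Dk f)); auto.
  - intros i m I L. apply (part2_b f c h (Dk f)); auto.
  - intros i m I L Lc. apply (part2_c f c h (Dk f)); auto.
Qed.
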